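(* Let $\Lambda$ be an isolated set of a partial flow $\phi$ on a metric space $X$. Let $N$ be an isolating neighborhood of $\Lambda$ and $\mathcal L_1\colon N\to\mathbb{R}$ a catenary function for $\Lambda$. Let $\delta>0$ be such that $\mathcal B=\{x\in N:\mathcal L_1(x)\le\delta\}$ is contained in the interior of $N$, and let $\partial\mathcal B$ denote the boundary of $\mathcal B$. Let $a\colon\mathcal B\setminus\Lambda\to(0,\infty)$ be continuous with $\dot a=0$ and $\inf a>0$, and let $f\colon\partial\mathcal B\to\mathbb{R}$ be continuous. Then there is a unique continuous function $\mathcal L_2\colon\mathcal B\to\mathbb{R}$ such that: - $\mathcal L_2(\Lambda)=0$; - $\ddot{\mathcal L}_2(x)=a(x)^2\mathcal L_2(x)$ for all $x\in\mathcal B\setminus\Lambda$; - $\mathcal L_2(x)=f(x)$ for all $x\in\partial\mathcal B$. If in addition $f>0$, then $\mathcal L_2(x)>0$ for all $x\in\mathcal B\setminus\Lambda$.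
   Context: A partial flow on a metric space $X$ is a continuous map $\phi\colon\Gamma\to X$ on an open set $\Gamma\subset\mathbb{R}\times X$. Here $\Gamma_x=\{t:(t,x)\in\Gamma\}$ is a connected set containing $0$, $\Gamma_{\phi_t(x)}=\Gamma_x-t$, $\phi_0=\mathrm{id}$, and $\phi_s\phi_t=\phi_{s+t}$ where defined. A $\phi$-invariant set $\Lambda$ is isolated if it has a compact neighborhood $N$ (an isolating neighborhood) such that $\phi_{\Gamma_x}(x)\subseteq N$ implies $x\in\Lambda$. $\dot{\mathcal L}(x)=\lim_{t\to0}(\mathcal L(\phi_t(x))-\mathcal L(x))/t$ and $\ddot{\mathcal L}=(\dot{\mathcal L})^{\cdot}$. A catenary function for $\Lambda$ is a continuous $\mathcal L\colon N\to\mathbb{R}$ on an isolating neighborhood $N$ with $\mathcal L(\Lambda)=0$, $\mathcal L>0$ on $N\setminus\Lambda$, and $\ddot{\mathcal L}=\mathcal L$ on $N$. *)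

(* Defs.v *)
From Stdlib Require Import Reals List.
Open Scope R_scope.

Section Defs.
Variable M : Metric_Space.
Local Notation X := (Base M).
Local Notation d := (dist M).

Definition in_ball (x : X) (r : R) (y : X) : Prop := d y x < r.

Definition m_open (U : X -> Prop) : Prop :=
  forall x, U x -> exists eps, eps > 0 /\ forall y, d y x < eps -> U y.

Definition m_interior (S : X -> Prop) (x : X) : Prop :=
  exists eps, eps > 0 /\ forall y, d y x < eps -> S y.

Definition m_closure (S : X -> Prop) (x : X) : Prop :=
  forall eps, eps > 0 -> exists y, S y /\ d y x < eps.

Definition m_boundary (S : X -> Prop) (x : X) : Prop :=
  m_closure S x /\ ~ m_interior S x.

Definition m_compact (K : X -> Prop) : Prop :=
  forall (I : Type) (U : I -> X -> Prop),
    (forall i, m_open (U i)) ->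
    (forall x, K x -> exists i, U i x) ->
    exists l : list I, forall x, K x -> exists i, In i l /\ U i x.

Definition m_continuous_on (D : X -> Prop) (g : X -> R) : Prop :=
  forall x, D x -> forall eps, eps > 0 -> exists delta, delta > 0 /\
    forall y, D y -> d y x < delta -> Rabs (g y - g x) < eps.

(* Partial flow: phi is defined (meaningfully) on Gamma ⊆ R × X. *)
Record partial_flow (Gamma : R -> X -> Prop) (phi : R -> X -> X) : Prop := {
  pf_open : forall t x, Gamma t x -> exists eps, eps > 0 /\
      forall s y, Rabs (s - t) < eps -> d y x < eps -> Gamma s y;
  pf_cont : forall t x, Gamma t x -> forall eps, eps > 0 -> exists delta, delta > 0 /\
      forall s y, Gamma s y -> Rabs (s - t) < delta -> d y x < delta ->
        d (phi s y) (phi t x) < eps;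
  pf_zero_in : forall x, Gamma 0 x;
  pf_connected : forall x s t u, Gamma s x -> Gamma u x -> s <= t <= u -> Gamma t x;
  pf_shift : forall t x, Gamma t x -> forall s, Gamma s (phi t x) <-> Gamma (s + t) x;
  pf_id : forall x, phi 0 x = x;
  pf_comp : forall s t x, Gamma t x -> Gamma s (phi t x) -> phi s (phi t x) = phi (s + t) x
}.

Definition invariant (Gamma : R -> X -> Prop) (phi : R -> X -> X) (L : X -> Prop) : Prop :=
  forall x t, L x -> Gamma t x -> L (phi t x).

Definition isolating_neighborhood (Gamma : R -> X -> Prop) (phi : R -> X -> X)
    (Lam N : X -> Prop) : Prop :=
  m_compact N /\ (forall x, Lam x -> m_interior N x) /\
  (forall x, (forall t, Gamma t x -> N (phi t x)) -> Lam x).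

Definition orb_deriv (Gamma : R -> X -> Prop) (phi : R -> X -> X)
    (D : X -> Prop) (g : X -> R) (x : X) (l : R) : Prop :=
  forall eps, eps > 0 -> exists delta, delta > 0 /\
    forall t, t <> 0 -> Rabs t < delta -> Gamma t x -> D (phi t x) ->
      Rabs ((g (phi t x) - g x) / t - l) < eps.

Definition catenary (Gamma : R -> X -> Prop) (phi : R -> X -> X)
    (Lam N : X -> Prop) (L : X -> R) : Prop :=
  m_continuous_on N L /\
  (forall x, Lam x -> L x = 0) /\
  (forall x, N x -> ~ Lam x -> L x > 0) /\
  exists Ld : X -> R,
    (forall x, N x -> orb_deriv Gamma phi N L x (Ld x)) /\
    (forall x, N x -> orb_deriv Gamma phi N Ld x (L x)).

End Defs.

(* Main.v *)
Require Import Defs.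
From Stdlib Require Import Reals List Lra Psatz Classical ClassicalEpsilon FunctionalExtensionality.
From Coquelicot Require Import Coquelicot.
Open Scope R_scope.

Lemma const_on (h : R -> R) (p q : R) : p <= q ->
  (forall s, p < s < q -> derivable_pt_lim h s 0) ->
  (forall s, p <= s <= q -> forall eps, eps > 0 -> exists eta, eta > 0 /\
      forall r, p <= r <= q -> Rabs (r - s) < eta -> Rabs (h r - h s) < eps) ->
  h p = h q.
Proof.
intros Hpq Hd Hc.
destruct (Req_dec p q) as [E|Hne]; [subst; reflexivity|].
set (cl := fun s => Rmax p (Rmin q s)).
assert (Hcl : forall s, p <= s <= q -> cl s = s).
{ intros s Hs; unfold cl. rewrite Rmin_right by lra. rewrite Rmax_right; lra. }
assert (Hcl2 : forall s, p <= cl s <= q).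
{ intros s; unfold cl. split. apply Rmax_l. apply Rmax_lub; [lra|apply Rmin_l]. }
assert (Hlip : forall r s, Rabs (cl r - cl s) <= Rabs (r - s)).
{ intros r s; unfold cl. unfold Rmax, Rmin.
  repeat (destruct Rle_dec); repeat (destruct Rle_dec); unfold Rabs;
  repeat destruct Rcase_abs; lra. }
set (h' := fun s => h (cl s)).
destruct (MVT_gen h' p q (fun _ => 0)) as [c [_ Hc']].
- intros x Hx. rewrite Rmin_left in Hx by lra. rewrite Rmax_right in Hx by lra.
  apply is_derive_ext_loc with h.
  + assert (Hpos : 0 < Rmin (x - p) (q - x)) by (apply Rmin_pos; lra).
    exists (mkposreal _ Hpos).
    intros y Hy. unfold ball in Hy; simpl in Hy; unfold AbsRing_ball, abs, minus, plus, opp in Hy; simpl in Hy.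
    unfold h'. rewrite Hcl; auto.
    apply Rabs_lt_between in Hy. destruct Hy as [Hy1 Hy2].
    pose proof (Rmin_l (x - p) (q - x)). pose proof (Rmin_r (x - p) (q - x)). lra.
  + apply is_derive_Reals. apply Hd. auto.
- intros x Hx. rewrite Rmin_left in Hx by lra. rewrite Rmax_right in Hx by lra.
  unfold continuity_pt, continue_in, limit1_in, limit_in. simpl. unfold R_dist.
  intros eps Heps. destruct (Hc x Hx eps Heps) as [eta [Heta H]].
  exists eta. split; auto. intros y [_ Hy].
  unfold h'. rewrite (Hcl x Hx).
  apply H. apply Hcl2. pose proof (Hlip y x) as H0. rewrite (Hcl x Hx) in H0. lra.
- unfold h' in Hc'. rewrite !Hcl in Hc' by lra. lra.
Qed.

Lemma deriv_cont (h : R -> R) s l : derivable_pt_lim h s l ->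
  forall eps, eps > 0 -> exists eta, eta > 0 /\ forall r, Rabs (r - s) < eta -> Rabs (h r - h s) < eps.
Proof.
intros H. assert (C : continuity_pt h s).
{ apply derivable_continuous_pt. exists l. exact H. }
intros eps Heps. destruct (C eps Heps) as [eta [Heta Hh]].
exists eta; split; auto. intros r Hr.
destruct (Req_dec r s) as [E|E]. subst. rewrite Rminus_diag, Rabs_R0. lra.
apply (Hh r). split. split. exact I. auto. exact Hr.
Qed.

Lemma list_ub {I : Type} (g : I -> R) (l : list I) : exists M, forall i, In i l -> g i <= M.
Proof.
induction l as [|a l [M HM]]. exists 0. intros i [].
exists (Rmax (g a) M). intros i [E|Hi]. subst. apply Rmax_l.
eapply Rle_trans. apply HM; auto. apply Rmax_r.
Qed.

Lemma quad_convex c dl e z1 z z2 : c >= 0 -> z1 <= z <= z2 ->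
  c * z1 ^ 2 - dl * z1 + e <= 0 -> c * z2 ^ 2 - dl * z2 + e <= 0 ->
  c * z ^ 2 - dl * z + e <= 0.
Proof.
intros Hc [H1 H2] Q1 Q2.
destruct (Req_dec z1 z2) as [E|E]. subst. replace z with z2 by lra. auto.
assert (Iden : (c * z ^ 2 - dl * z + e) * (z2 - z1) =
  (z2 - z) * (c * z1 ^ 2 - dl * z1 + e) + (z - z1) * (c * z2 ^ 2 - dl * z2 + e)
  - c * (z - z1) * (z2 - z) * (z2 - z1)) by ring.
assert (0 < z2 - z1) by lra.
assert (0 <= c * (z - z1) * (z2 - z) * (z2 - z1)).
{ repeat apply Rmult_le_pos; lra. }
assert (A : (c * z ^ 2 - dl * z + e) * (z2 - z1) <= 0).
{ rewrite Iden. assert (0 <= z2 - z) by lra. assert (0 <= z - z1) by lra.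
  nra. }
nra.
Qed.

Lemma dl_mult (A B : R -> R) x la lb : derivable_pt_lim A x la -> derivable_pt_lim B x lb ->
  derivable_pt_lim (fun s => A s * B s) x (la * B x + A x * lb).
Proof. intros. apply (derivable_pt_lim_mult A B); auto. Qed.
Lemma dl_plus (A B : R -> R) x la lb : derivable_pt_lim A x la -> derivable_pt_lim B x lb ->
  derivable_pt_lim (fun s => A s + B s) x (la + lb).
Proof. intros. apply (derivable_pt_lim_plus A B); auto. Qed.
Lemma dl_minus (A B : R -> R) x la lb : derivable_pt_lim A x la -> derivable_pt_lim B x lb ->
  derivable_pt_lim (fun s => A s - B s) x (la - lb).
Proof. intros. apply (derivable_pt_lim_minus A B); auto. Qed.
Lemma dl_const c x : derivable_pt_lim (fun _ => c) x 0.
Proof. apply derivable_pt_lim_const. Qed.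
Lemma dl_explin c x : derivable_pt_lim (fun s => exp (c * s)) x (c * exp (c * x)).
Proof.
apply is_derive_Reals. auto_derive. auto. ring.
Qed.
Lemma dl_ext (A B : R -> R) x l : (forall s, A s = B s) -> derivable_pt_lim A x l -> derivable_pt_lim B x l.
Proof. intros E H. replace B with A; auto. apply functional_extensionality; auto. Qed.
Lemma dl_eq (A : R -> R) x l l' : l = l' -> derivable_pt_lim A x l -> derivable_pt_lim A x l'.
Proof. intros; subst; auto. Qed.

Section Main.
Variable M : Metric_Space.
Local Notation X := (Base M).
Local Notation d := (dist M).
Variables (Gamma : R -> X -> Prop) (phi : R -> X -> X) (Lam N : X -> Prop)
  (L1 Ld : X -> R) (delta : R) (a f : X -> R) (m : R).
Hypothesis HF : partial_flow M Gamma phi.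
Hypothesis Hinv : invariant M Gamma phi Lam.
Hypothesis Hcomp : m_compact M N.
Hypothesis HLamint : forall x, Lam x -> m_interior M N x.
Hypothesis HL1c : m_continuous_on M N L1.
Hypothesis HL10 : forall x, Lam x -> L1 x = 0.
Hypothesis HL1p : forall x, N x -> ~ Lam x -> L1 x > 0.
Hypothesis HLd1 : forall x, N x -> orb_deriv M Gamma phi N L1 x (Ld x).
Hypothesis HLd2 : forall x, N x -> orb_deriv M Gamma phi N Ld x (L1 x).
Hypothesis Hdel : delta > 0.
Hypothesis HBint : forall x, N x -> L1 x <= delta -> m_interior M N x.

Definition B x := N x /\ L1 x <= delta.
Definition BL x := B x /\ ~ Lam x.

Lemma d_self x : d x x = 0.
Proof. apply dist_refl. auto. Qed.
Lemma d_tri x y z : d x z <= d x y + d y z.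
Proof. pose proof (dist_tri M x z y). auto. Qed.
Lemma d_sym x y : d x y = d y x.
Proof. apply dist_sym. Qed.
Lemma d_pos x y : 0 <= d x y.
Proof. pose proof (dist_pos M x y). lra. Qed.

Lemma int_N x : m_interior M N x -> N x.
Proof. intros [e [He H]]. apply H. rewrite d_self. auto. Qed.

Lemma window x r : m_interior M N x -> r > 0 -> exists e, e > 0 /\
  forall y t, d y x < e -> Rabs t < e ->
    Gamma t y /\ m_interior M N (phi t y) /\ d (phi t y) x < r.
Proof.
intros [e0 [He0 HN]] Hr.
destruct (pf_open _ _ _ HF 0 x (pf_zero_in _ _ _ HF x)) as [e1 [He1 Ho]].
destruct (pf_cont _ _ _ HF 0 x (pf_zero_in _ _ _ HF x) (Rmin r (e0/2))) as [e2 [He2 Hc]].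
{ apply Rmin_pos; lra. }
exists (Rmin e1 e2). split. apply Rmin_pos; auto.
intros y t Hy Ht.
assert (Hm1 := Rmin_l e1 e2). assert (Hm2 := Rmin_r e1 e2).
assert (Gt : Gamma t y). { apply Ho. rewrite Rminus_0_r. lra. lra. }
assert (Hd : d (phi t y) (phi 0 x) < Rmin r (e0/2)).
{ apply Hc; auto. rewrite Rminus_0_r. lra. lra. }
rewrite (pf_id _ _ _ HF) in Hd.
assert (Hm3 := Rmin_l r (e0/2)). assert (Hm4 := Rmin_r r (e0/2)).
split; auto. split; [|lra].
exists (e0/2). split. lra. intros z Hz. apply HN.
pose proof (d_tri z (phi t y) x). lra.
Qed.

Lemma Gshift t s x : Gamma t x -> Gamma (s + t) x -> Gamma s (phi t x).
Proof. intros H1 H2. apply (pf_shift _ _ _ HF t x H1 s). auto. Qed.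

Lemma phishift t s x : Gamma t x -> Gamma (s + t) x -> phi s (phi t x) = phi (s + t) x.
Proof. intros H1 H2. apply (pf_comp _ _ _ HF); auto. apply Gshift; auto. Qed.

Lemma Lam_back t x : Gamma t x -> Lam (phi t x) -> Lam x.
Proof.
intros Ht HL.
assert (G0 : Gamma (- t + t) x). { replace (-t + t) with 0 by ring. apply (pf_zero_in _ _ _ HF). }
pose proof (Hinv (phi t x) (-t) HL (Gshift t (-t) x Ht G0)) as H.
rewrite phishift in H; auto. replace (-t + t) with 0 in H by ring.
rewrite (pf_id _ _ _ HF) in H. auto.
Qed.

Lemma Lam_fwd t x : Gamma t x -> Lam x -> Lam (phi t x).
Proof. intros; apply Hinv; auto. Qed.

Lemma orbit_cont x s0 : Gamma s0 x -> forall eps, eps > 0 -> exists eta, eta > 0 /\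
  forall s, Gamma s x -> Rabs (s - s0) < eta -> d (phi s x) (phi s0 x) < eps.
Proof.
intros Hs eps He. destruct (pf_cont _ _ _ HF s0 x Hs eps He) as [e [He' H]].
exists e. split; auto. intros s Gs Hs'. apply H; auto. rewrite d_self; auto.
Qed.

Definition G x T := forall r, 0 <= r <= 1 -> Gamma (r * T) x /\ m_interior M N (phi (r * T) x).

Lemma G_between x T s : G x T -> Rmin 0 T <= s <= Rmax 0 T -> Gamma s x /\ m_interior M N (phi s x).
Proof.
intros HG Hs.
destruct (Req_dec T 0) as [E|E].
- subst. rewrite Rmin_left, Rmax_left in Hs by lra. replace s with (0 * 0) by lra. apply HG; lra.
- replace s with ((s / T) * T) by (field; auto). apply HG.
  unfold Rmin, Rmax in Hs. destruct Rle_dec in Hs.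
  + assert (0 < T) by lra. split. apply Rdiv_le_0_compat; lra.
    apply Rmult_le_reg_r with T; auto. field_simplify; lra.
  + assert (T < 0) by lra. split.
    * unfold Rdiv. replace (s * / T) with ((- s) * / (- T)) by (field; auto).
      apply Rmult_le_pos; [lra|]. left; apply Rinv_0_lt_compat; lra.
    * unfold Rdiv. replace (s * / T) with ((- s) * / (- T)) by (field; auto).
      apply Rmult_le_reg_r with (-T); [lra|]. field_simplify; lra.
Qed.

Lemma G_intro x T : (forall s, Rmin 0 T <= s <= Rmax 0 T -> Gamma s x /\ m_interior M N (phi s x)) -> G x T.
Proof.
intros H r Hr. apply H. unfold Rmin, Rmax. destruct Rle_dec; nra.
Qed.

Lemma D1 (D : X -> Prop) (g : X -> R) x t l : Gamma t x ->
  (exists eta, eta > 0 /\ forall h, Rabs h < eta -> Gamma (h + t) x /\ D (phi (h + t) x)) ->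
  orb_deriv M Gamma phi D g (phi t x) l ->
  derivable_pt_lim (fun s => g (phi s x)) t l.
Proof.
intros Gt [eta [Heta Hn]] Hd eps Heps.
destruct (Hd eps Heps) as [del [Hdel' H]].
assert (Hp : 0 < Rmin del eta) by (apply Rmin_pos; auto).
exists (mkposreal _ Hp). intros h Hh0 Hh. simpl in Hh.
assert (Hm1 := Rmin_l del eta). assert (Hm2 := Rmin_r del eta).
destruct (Hn h) as [Gh Dh]. lra.
rewrite Rplus_comm. rewrite <- phishift; auto.
apply H; auto. lra. apply Gshift; auto. rewrite phishift; auto.
Qed.

Lemma D1_intN (g : X -> R) x t l : Gamma t x -> m_interior M N (phi t x) ->
  orb_deriv M Gamma phi N g (phi t x) l ->
  derivable_pt_lim (fun s => g (phi s x)) t l.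
Proof.
intros Gt Hi Hd. apply D1 with N; auto.
destruct (window (phi t x) 1 Hi ltac:(lra)) as [e [He H]].
exists e. split; auto. intros h Hh.
destruct (H (phi t x) h) as [G1 [I1 _]]; auto. rewrite d_self; auto.
assert (Gamma (h + t) x). { apply (pf_shift _ _ _ HF t x Gt h). auto. }
split; auto. rewrite <- phishift; auto. apply int_N; auto.
Qed.

Definition u x := (L1 x + Ld x) / 2.
Definition v x := (L1 x - Ld x) / 2.

Lemma OF x T : G x T -> L1 (phi T x) = u x * exp T + v x * exp (- T) /\
                        Ld (phi T x) = u x * exp T - v x * exp (- T).
Proof.
intros HG.
set (g := fun s => L1 (phi s x)). set (k := fun s => Ld (phi s x)).
assert (Dg : forall s, Rmin 0 T <= s <= Rmax 0 T -> derivable_pt_lim g s (k s)).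
{ intros s Hs. destruct (G_between x T s HG Hs) as [Gs Is].
  apply D1_intN; auto. apply HLd1. apply int_N; auto. }
assert (Dk : forall s, Rmin 0 T <= s <= Rmax 0 T -> derivable_pt_lim k s (g s)).
{ intros s Hs. destruct (G_between x T s HG Hs) as [Gs Is].
  apply D1_intN; auto. apply HLd2. apply int_N; auto. }
set (p := fun s => (g s + k s) * exp (- s)).
set (q := fun s => (g s - k s) * exp s).
assert (Dp : forall s, Rmin 0 T <= s <= Rmax 0 T -> derivable_pt_lim p s 0).
{ intros s Hs. unfold p.
  apply (dl_eq _ _ ((k s + g s) * exp (-s) + (g s + k s) * (-1 * exp (-1 * s)))).
  replace (-1 * s) with (- s) by ring. ring.
  apply (dl_mult (fun s => g s + k s) (fun s => exp (- s))). apply (dl_plus g k); auto.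
  apply dl_ext with (fun s => exp (-1 * s)). intros; f_equal; ring. apply dl_explin. }
assert (Dq : forall s, Rmin 0 T <= s <= Rmax 0 T -> derivable_pt_lim q s 0).
{ intros s Hs. unfold q.
  apply (dl_eq _ _ ((k s - g s) * exp s + (g s - k s) * (1 * exp (1 * s)))).
  replace (1 * s) with s by ring. ring.
  apply (dl_mult (fun s => g s - k s) (fun s => exp s)). apply (dl_minus g k); auto.
  apply dl_ext with (fun s => exp (1 * s)). intros; f_equal; ring. apply dl_explin. }
assert (E : p T = p 0 /\ q T = q 0).
{ destruct (Req_dec T 0) as [E|E]. subst; auto.
  assert (Hab : Rmin 0 T < Rmax 0 T). { unfold Rmin, Rmax; destruct Rle_dec; lra. }
  destruct (MVT_cor2 p (fun _ => 0) _ _ Hab Dp) as [c1 [Hc1 _]].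
  destruct (MVT_cor2 q (fun _ => 0) _ _ Hab Dq) as [c2 [Hc2 _]].
  unfold Rmin, Rmax in *; destruct Rle_dec; split; lra. }
destruct E as [E1 E2]. unfold p, q, g, k in *.
rewrite (pf_id _ _ _ HF) in E1, E2.
rewrite Ropp_0, exp_0 in E1. rewrite exp_0 in E2.
assert (Hx1 : exp (- T) * exp T = 1). { rewrite <- exp_plus. replace (-T + T) with 0 by ring. apply exp_0. }
unfold u, v. split.
- assert (L1 (phi T x) + Ld (phi T x) = (L1 x + Ld x) * exp T).
  { apply Rmult_eq_reg_r with (exp (-T)). rewrite E1. rewrite Rmult_assoc, (Rmult_comm (exp T)), Hx1. ring. pose proof (exp_pos (-T)); lra. }
  assert (L1 (phi T x) - Ld (phi T x) = (L1 x - Ld x) * exp (-T)).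
  { apply Rmult_eq_reg_r with (exp T). rewrite E2. rewrite Rmult_assoc, Hx1. ring. pose proof (exp_pos T); lra. }
  lra.
- assert (L1 (phi T x) + Ld (phi T x) = (L1 x + Ld x) * exp T).
  { apply Rmult_eq_reg_r with (exp (-T)). rewrite E1. rewrite Rmult_assoc, (Rmult_comm (exp T)), Hx1. ring. pose proof (exp_pos (-T)); lra. }
  assert (L1 (phi T x) - Ld (phi T x) = (L1 x - Ld x) * exp (-T)).
  { apply Rmult_eq_reg_r with (exp T). rewrite E2. rewrite Rmult_assoc, Hx1. ring. pose proof (exp_pos T); lra. }
  lra.
Qed.

Lemma ball_open y e : m_open M (fun z => d z y < e).
Proof.
intros z Hz. exists (e - d z y). split. lra.
intros w Hw. pose proof (d_tri w z y). lra.
Qed.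

Lemma list_ub_lt {I : Type} (g : I -> R) (S : R) (l : list I) :
  (forall i, g i < S) -> exists M, M < S /\ forall i, In i l -> g i <= M.
Proof.
intros Hg. induction l as [|a0 l [M0 [HM0 HM]]].
- exists (S - 1). split. lra. intros i [].
- exists (Rmax (g a0) M0). split. apply Rmax_lub_lt; auto.
  intros i [E|Hi]. subst. apply Rmax_l. eapply Rle_trans. apply HM; auto. apply Rmax_r.
Qed.

Lemma CT x T : B x ->
  (forall s, Rmin 0 T <= s <= Rmax 0 T -> u x * exp s + v x * exp (- s) <= delta) -> G x T.
Proof.
intros Bx Hf.
assert (Ix : m_interior M N x) by (apply HBint; apply Bx).
destruct (Req_dec T 0) as [T0|T0].
{ subst. intros r Hr. rewrite Rmult_0_r. split. apply (pf_zero_in _ _ _ HF). rewrite (pf_id _ _ _ HF); auto. }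
set (good := fun rho => forall r, 0 <= r <= rho -> Gamma (r * T) x /\ m_interior M N (phi (r * T) x)).
set (E := fun rho => 0 <= rho <= 1 /\ good rho).
assert (good0 : good 0).
{ intros r Hr. replace (r * T) with 0 by (replace r with 0 by lra; ring).
  split. apply (pf_zero_in _ _ _ HF). rewrite (pf_id _ _ _ HF); auto. }
assert (Eb : bound E). { exists 1. intros z [Hz _]. lra. }
assert (Ene : exists z, E z). { exists 0. split. lra. auto. }
destruct (completeness E Eb Ene) as [S [HS1 HS2]].
assert (S0 : 0 <= S) by (apply HS1; split; [lra|auto]).
assert (S1 : S <= 1) by (apply HS2; intros z [Hz _]; lra).
assert (C1 : forall tau, 0 <= tau < S -> good tau).
{ intros tau Ht. destruct (classic (exists rho, E rho /\ tau < rho)) as [[rho [[_ Hr] Hlt]]|Hn].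
  - intros r Hr'. apply Hr. lra.
  - exfalso. assert (S <= tau). { apply HS2. intros z Ez. destruct (Rle_dec z tau); auto.
      exfalso; apply Hn; exists z; split; auto; lra. } lra. }
assert (C2 : forall tau, 0 <= tau <= 1 -> good tau -> B (phi (tau * T) x)).
{ intros tau Ht Hg.
  assert (HG : G x (tau * T)). { intros r Hr. rewrite <- Rmult_assoc. apply Hg. nra. }
  destruct (OF x _ HG) as [HL _].
  destruct (Hg tau) as [_ Hi]. lra.
  split. apply int_N; auto. rewrite HL. apply Hf.
  unfold Rmin, Rmax; destruct Rle_dec; nra. }
assert (C3 : exists y, B y /\ forall eps, eps > 0 -> exists tau, 0 <= tau <= S /\ S - eps < tau /\
          good tau /\ d (phi (tau * T) x) y < eps).
{ destruct (Req_dec S 0) as [SZ|SZ].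
  - exists x. split; auto. intros eps Heps. exists 0. split. lra. split. lra. split. auto.
    rewrite Rmult_0_l, (pf_id _ _ _ HF), d_self. auto.
  - assert (Spos : 0 < S) by lra.
    assert (CL : exists y, N y /\ forall eps, eps > 0 -> forall tau0, tau0 < S ->
              exists tau, tau0 < tau < S /\ 0 <= tau /\ d (phi (tau * T) x) y < eps).
    { apply NNPP. intros Hn.
      set (P := fun p : X * R * R => N (fst (fst p)) /\ snd (fst p) > 0 /\ snd p < S /\
            forall tau, snd p < tau < S -> 0 <= tau -> d (phi (tau * T) x) (fst (fst p)) >= snd (fst p)).
      set (I := sig P).
      set (U := fun (i : I) z => d z (fst (fst (proj1_sig i))) < snd (fst (proj1_sig i))).
      destruct (Hcomp I U) as [l Hl].
      + intros i. apply ball_open.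
      + intros z Nz.
        assert (Hz : exists e, e > 0 /\ exists tau0, tau0 < S /\ forall tau, tau0 < tau < S -> 0 <= tau ->
                   d (phi (tau * T) x) z >= e).
        { apply NNPP. intros Hz. apply Hn. exists z. split; auto.
          intros eps Heps tau0 Ht0. apply NNPP. intros Hne. apply Hz. exists eps. split; auto.
          exists tau0. split; auto. intros tau Ht Ht'. apply Rnot_lt_ge. intros Hl'. apply Hne.
          exists tau. auto. }
        destruct Hz as [e [He [tau0 [Ht0 Hz]]]].
        assert (Pz : P (z, e, tau0)). { unfold P; simpl. auto. }
        exists (exist P (z, e, tau0) Pz). unfold U; simpl. rewrite d_self. auto.
      + destruct (list_ub_lt (fun i : I => snd (proj1_sig i)) S l) as [M0 [HM0 HM]].
        { intros [p Hp]. simpl. apply Hp. }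
        set (tau := (Rmax M0 0 + S) / 2).
        assert (Hm1 := Rmax_l M0 0). assert (Hm2 := Rmax_r M0 0).
        assert (Hm3 : Rmax M0 0 < S) by (apply Rmax_lub_lt; auto).
        assert (Hgt : good tau) by (apply C1; unfold tau; lra).
        destruct (Hgt tau) as [_ Hi]. unfold tau; lra.
        destruct (Hl _ (int_N _ Hi)) as [i [Hin Hu]].
        destruct i as [[[y e] t0] [Ny [He [Ht0 Hy]]]]. unfold U in Hu; simpl in *.
        specialize (HM _ Hin). simpl in HM.
        assert (d (phi (tau * T) x) y >= e) by (apply Hy; unfold tau; lra). lra. }
    destruct CL as [y [Ny Hy]].
    exists y. split.
    + split; auto. apply Rnot_lt_le. intros Hlt.
      destruct (HL1c y Ny (L1 y - delta)) as [rho [Hrho Hc]]. lra.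
      destruct (Hy rho Hrho 0 Spos) as [tau [Ht1 [Ht2 Ht3]]].
      assert (Bz := C2 tau ltac:(lra) (C1 tau ltac:(lra))). destruct Bz as [Nz Lz].
      specialize (Hc _ Nz Ht3). apply Rabs_lt_between in Hc. lra.
    + intros eps Heps. destruct (Hy eps Heps (Rmax (S - eps) 0)) as [tau [Ht1 [Ht2 Ht3]]].
      apply Rmax_lub_lt; lra.
      assert (Hm1 := Rmax_l (S - eps) 0).
      exists tau. split. lra. split. lra. split. apply C1; lra. auto. }
destruct C3 as [y [By Hy]].
assert (Iy : m_interior M N y) by (apply HBint; apply By).
destruct (window y 1 Iy ltac:(lra)) as [e [He Hw]].
assert (HT : Rabs T > 0) by (apply Rabs_pos_lt; auto).
set (c := e / Rabs T).
assert (Hc : c > 0) by (unfold c; apply Rdiv_lt_0_compat; lra).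
destruct (Hy (Rmin e (c / 2))) as [tau [Ht1 [Ht2 [Ht3 Ht4]]]].
{ apply Rmin_pos; lra. }
assert (Hmn1 := Rmin_l e (c/2)). assert (Hmn2 := Rmin_r e (c/2)).
set (S2 := Rmin 1 (tau + c / 2)).
assert (Hs1 := Rmin_l 1 (tau + c/2)). assert (Hs2 := Rmin_r 1 (tau + c/2)).
assert (GS2 : good S2).
{ intros r Hr. destruct (Rle_dec r tau) as [Hrt|Hrt]. apply Ht3; lra.
  set (h := (r - tau) * T).
  assert (Hh : Rabs h < e).
  { unfold h. rewrite Rabs_mult. rewrite (Rabs_right (r - tau)) by lra.
    assert (r - tau <= c / 2) by (unfold S2, Rmin in Hr; destruct Rle_dec in Hr; lra).
    assert ((r - tau) * Rabs T <= c / 2 * Rabs T) by (apply Rmult_le_compat_r; lra).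
    assert (c / 2 * Rabs T = e / 2) by (unfold c; field; lra). lra. }
  destruct (Ht3 tau) as [Gt _]. lra.
  destruct (Hw (phi (tau * T) x) h) as [Gh [Ih _]]; [lra|auto|].
  assert (Eh : h + tau * T = r * T) by (unfold h; ring).
  assert (Gr : Gamma (r * T) x). { rewrite <- Eh. apply (pf_shift _ _ _ HF _ _ Gt). auto. }
  split; auto. rewrite <- Eh. rewrite <- phishift; auto. rewrite Eh; auto. }
assert (ES2 : E S2). { split; auto. unfold S2, Rmin; destruct Rle_dec; lra. }
assert (S2le : S2 <= S) by (apply HS1; auto).
assert (S = 1).
{ destruct (Req_dec S 1); auto. exfalso.
  unfold S2, Rmin in S2le. destruct Rle_dec in S2le; lra. }
assert (S2 = 1). { unfold S2, Rmin. destruct Rle_dec; lra. }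
intros r Hr. apply GS2. lra.
Qed.

Lemma exp_le x y : x <= y -> exp x <= exp y.
Proof. intros [H|H]. left; apply exp_increasing; auto. subst; lra. Qed.
Lemma ln_le x y : 0 < x -> x <= y -> ln x <= ln y.
Proof. intros H [H'|H']. left; apply ln_increasing; auto. subst; lra. Qed.
Lemma exp_mp s : exp (- s) * exp s = 1.
Proof. rewrite <- exp_plus. replace (-s + s) with 0 by ring. apply exp_0. Qed.

Lemma L1_uv x : L1 x = u x + v x.
Proof. unfold u, v. field. Qed.

Lemma UV x : BL x -> 0 <= u x /\ 0 <= v x.
Proof.
intros [Bx Lx]. pose proof Bx as [Nx Lx1].
assert (Hp : L1 x > 0) by (apply HL1p; auto). rewrite L1_uv in Hp, Lx1.
split; apply Rnot_lt_le; intros Hneg.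
- (* u < 0, so v > 0: forward *)
  set (t0 := ln (- u x / v x) / 2).
  assert (Hr : 0 < - u x / v x < 1).
  { split. apply Rdiv_lt_0_compat; lra. apply Rmult_lt_reg_r with (v x). lra.
    unfold Rdiv. rewrite Rmult_assoc, Rinv_l by lra. lra. }
  assert (t0 <= 0). { unfold t0. assert (ln (- u x / v x) <= ln 1) by (apply ln_le; lra). rewrite ln_1 in H. lra. }
  assert (HG : G x (-t0)).
  { apply CT; auto. intros s Hs. rewrite Rmin_left, Rmax_right in Hs by lra.
    assert (exp s >= 1). { pose proof (exp_le 0 s ltac:(lra)). rewrite exp_0 in H0. lra. }
    assert (exp (-s) <= 1). { pose proof (exp_le (-s) 0 ltac:(lra)). rewrite exp_0 in H1. lra. }
    nra. }
  destruct (OF x _ HG) as [HL _].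
  destruct (G_between x (-t0) (-t0) HG) as [Gt It]. unfold Rmin, Rmax; destruct Rle_dec; lra.
  assert (E2 : exp (-t0) * exp (-t0) = v x / (- u x)).
  { rewrite <- exp_plus. replace (-t0 + -t0) with (- ln (- u x / v x)) by (unfold t0; field).
    rewrite exp_Ropp, exp_ln by lra. field. lra. }
  assert (L1 (phi (-t0) x) = 0).
  { rewrite HL. rewrite Ropp_involutive.
    pose proof (exp_mp (-t0)). rewrite Ropp_involutive in H0.
    apply Rmult_eq_reg_r with (exp (-t0)). 2: pose proof (exp_pos (-t0)); lra.
    replace ((u x * exp (- t0) + v x * exp t0) * exp (- t0)) with (u x * (exp (-t0) * exp (-t0)) + v x * (exp t0 * exp (-t0))) by ring.
    rewrite E2, H0. field. lra. }
  destruct (classic (Lam (phi (-t0) x))) as [HL'|HL'].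
  + apply Lx. eapply Lam_back; eauto.
  + pose proof (HL1p _ (int_N _ It) HL'). lra.
- set (t0 := ln (- v x / u x) / 2).
  assert (Hr : 0 < - v x / u x < 1).
  { split. apply Rdiv_lt_0_compat; lra. apply Rmult_lt_reg_r with (u x). lra.
    unfold Rdiv. rewrite Rmult_assoc, Rinv_l by lra. lra. }
  assert (t0 <= 0). { unfold t0. assert (ln (- v x / u x) <= ln 1) by (apply ln_le; lra). rewrite ln_1 in H. lra. }
  assert (HG : G x t0).
  { apply CT; auto. intros s Hs. rewrite Rmin_right, Rmax_left in Hs by lra.
    assert (exp s <= 1). { pose proof (exp_le s 0 ltac:(lra)). rewrite exp_0 in H0. lra. }
    assert (exp (-s) >= 1). { pose proof (exp_le 0 (-s) ltac:(lra)). rewrite exp_0 in H1. lra. }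
    nra. }
  destruct (OF x _ HG) as [HL _].
  destruct (G_between x t0 t0 HG) as [Gt It]. unfold Rmin, Rmax; destruct Rle_dec; lra.
  assert (E2 : exp t0 * exp t0 = - v x / u x).
  { rewrite <- exp_plus. replace (t0 + t0) with (ln (- v x / u x)) by (unfold t0; field).
    rewrite exp_ln by lra. auto. }
  assert (L1 (phi t0 x) = 0).
  { rewrite HL. pose proof (exp_mp t0).
    apply Rmult_eq_reg_r with (exp t0). 2: pose proof (exp_pos t0); lra.
    replace ((u x * exp t0 + v x * exp (- t0)) * exp t0) with (u x * (exp t0 * exp t0) + v x * (exp (-t0) * exp t0)) by ring.
    rewrite E2, H0. field. lra. }
  destruct (classic (Lam (phi t0 x))) as [HL'|HL'].
  + apply Lx. eapply Lam_back; eauto.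
  + pose proof (HL1p _ (int_N _ It) HL'). lra.
Qed.

Lemma seg_B x T : G x T -> (forall s, Rmin 0 T <= s <= Rmax 0 T -> u x * exp s + v x * exp (- s) <= delta) ->
  forall s, Rmin 0 T <= s <= Rmax 0 T -> B (phi s x).
Proof.
intros HG Hf s Hs.
assert (HGs : G x s). { apply G_intro. intros r Hr. apply (G_between x T r HG).
  unfold Rmin, Rmax in *. destruct (Rle_dec 0 T), (Rle_dec 0 s); lra. }
destruct (OF x s HGs) as [HL _]. destruct (G_between x T s HG Hs) as [_ Is].
split. apply int_N; auto. rewrite HL. apply Hf; auto.
Qed.

Lemma BL_of_B x s : BL x -> Gamma s x -> B (phi s x) -> BL (phi s x).
Proof. intros [_ Lx] Gs Bs. split; auto. intros HL. apply Lx. eapply Lam_back; eauto. Qed.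

Definition Dq x := sqrt (delta ^ 2 - 4 * u x * v x).
Definition Ep x := 2 * u x / (delta + Dq x).
Definition Em x := 2 * v x / (delta + Dq x).

Lemma disc x : BL x -> 0 <= delta ^ 2 - 4 * u x * v x.
Proof.
intros H. destruct (UV x H) as [Hu Hv]. destruct H as [[_ Hl] _]. rewrite L1_uv in Hl.
assert (0 <= (u x - v x) ^ 2) by apply pow2_ge_0.
assert ((u x + v x) * (u x + v x) <= delta * delta) by (apply Rmult_le_compat; lra).
simpl. lra.
Qed.

Lemma Dq_props x : BL x -> 0 <= Dq x /\ Dq x ^ 2 = delta ^ 2 - 4 * u x * v x.
Proof.
intros H. pose proof (disc x H). unfold Dq. split. apply sqrt_pos.
rewrite <- Rsqr_pow2. apply Rsqr_sqrt. auto.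
Qed.

Lemma Ep_Em_bounds x : BL x -> 0 <= Ep x <= 1 /\ 0 <= Em x <= 1.
Proof.
intros H. destruct (UV x H) as [Hu Hv]. destruct (Dq_props x H) as [HD1 HD2].
pose proof H as [[_ Hl] _]. rewrite L1_uv in Hl.
unfold Ep, Em. assert (Hpos : 0 < delta + Dq x) by lra.
split; split.
- apply Rdiv_le_0_compat; lra.
- apply Rmult_le_reg_r with (delta + Dq x); auto. unfold Rdiv. rewrite Rmult_assoc, Rinv_l by lra.
  rewrite Rmult_1_r, Rmult_1_l. destruct (Rle_dec (2 * u x) delta). lra. nra.
- apply Rdiv_le_0_compat; lra.
- apply Rmult_le_reg_r with (delta + Dq x); auto. unfold Rdiv. rewrite Rmult_assoc, Rinv_l by lra.
  rewrite Rmult_1_r, Rmult_1_l. destruct (Rle_dec (2 * v x) delta). lra. nra.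
Qed.

Definition tp x := - ln (Ep x).
Definition tm x := ln (Em x).
Definition ex x := phi (tp x) x.
Definition en x := phi (tm x) x.

Lemma EX x : BL x -> u x > 0 ->
  0 <= tp x /\ G x (tp x) /\ (forall s, 0 <= s <= tp x -> B (phi s x)) /\ L1 (ex x) = delta.
Proof.
intros H Hu. destruct (UV x H) as [_ Hv]. destruct (Dq_props x H) as [HD1 HD2].
destruct (Ep_Em_bounds x H) as [[E1 E2] _].
pose proof H as [Bx _]. pose proof Bx as [_ Hl]. rewrite L1_uv in Hl.
assert (Ep0 : 0 < Ep x). { unfold Ep. apply Rdiv_lt_0_compat; lra. }
assert (Htp : 0 <= tp x). { unfold tp. assert (ln (Ep x) <= ln 1) by (apply ln_le; lra). rewrite ln_1 in H0. lra. }
assert (EZ : exp (tp x) = (delta + Dq x) / (2 * u x)).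
{ unfold tp. rewrite exp_Ropp, exp_ln by auto. unfold Ep. field. lra. }
set (Z := (delta + Dq x) / (2 * u x)).
assert (QZ : u x * Z ^ 2 - delta * Z + v x = 0). { unfold Z. field_simplify. 2: lra.
  replace (Dq x ^ 2) with (delta ^ 2 - 4 * u x * v x). field. lra. }
assert (Hform : forall s, 0 <= s <= tp x -> u x * exp s + v x * exp (- s) <= delta).
{ intros s Hs. set (z := exp s). assert (Hz : 1 <= z <= Z).
  { unfold z. split. rewrite <- exp_0. apply exp_le; lra. fold Z in EZ. rewrite <- EZ. apply exp_le; lra. }
  assert (Q : u x * z ^ 2 - delta * z + v x <= 0).
  { apply quad_convex with 1 Z; lra. }
  rewrite exp_Ropp. fold z. apply Rmult_le_reg_r with z. lra.
  replace ((u x * z + v x * / z) * z) with (u x * z ^ 2 + v x) by (field; lra). lra. }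
assert (HG : G x (tp x)). { apply CT; auto. intros s Hs. apply Hform. unfold Rmin, Rmax in Hs; destruct Rle_dec in Hs; lra. }
split; auto. split; auto. split.
- intros s Hs. apply (seg_B x (tp x) HG). intros r Hr. apply Hform. unfold Rmin, Rmax in Hr; destruct Rle_dec in Hr; lra.
  unfold Rmin, Rmax; destruct Rle_dec; lra.
- unfold ex. destruct (OF x _ HG) as [HL _]. rewrite HL. rewrite exp_Ropp. fold Z in EZ. rewrite EZ.
  assert (Z > 0) by (unfold Z; apply Rdiv_lt_0_compat; lra).
  apply Rmult_eq_reg_r with Z; [|lra].
  replace ((u x * Z + v x * / Z) * Z) with (u x * Z ^ 2 + v x) by (field; lra). lra.
Qed.

Lemma EN x : BL x -> v x > 0 ->
  tm x <= 0 /\ G x (tm x) /\ (forall s, tm x <= s <= 0 -> B (phi s x)) /\ L1 (en x) = delta.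
Proof.
intros H Hv. destruct (UV x H) as [Hu _]. destruct (Dq_props x H) as [HD1 HD2].
destruct (Ep_Em_bounds x H) as [_ [E1 E2]].
pose proof H as [Bx _]. pose proof Bx as [_ Hl]. rewrite L1_uv in Hl.
assert (Em0 : 0 < Em x). { unfold Em. apply Rdiv_lt_0_compat; lra. }
assert (Htm : tm x <= 0). { unfold tm. assert (ln (Em x) <= ln 1) by (apply ln_le; lra). rewrite ln_1 in H0. lra. }
assert (EZ : exp (- tm x) = (delta + Dq x) / (2 * v x)).
{ unfold tm. rewrite exp_Ropp, exp_ln by auto. unfold Em. field. lra. }
set (Z := (delta + Dq x) / (2 * v x)).
assert (QZ : v x * Z ^ 2 - delta * Z + u x = 0). { unfold Z. field_simplify. 2: lra.
  replace (Dq x ^ 2) with (delta ^ 2 - 4 * u x * v x). field. lra. }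
assert (Hform : forall s, tm x <= s <= 0 -> u x * exp s + v x * exp (- s) <= delta).
{ intros s Hs. set (z := exp (- s)). assert (Hz : 1 <= z <= Z).
  { unfold z. split. rewrite <- exp_0. apply exp_le; lra. fold Z in EZ. rewrite <- EZ. apply exp_le; lra. }
  assert (Q : v x * z ^ 2 - delta * z + u x <= 0).
  { apply quad_convex with 1 Z; lra. }
  replace (exp s) with (/ z) by (unfold z; rewrite exp_Ropp, Rinv_inv; auto).
  apply Rmult_le_reg_r with z. lra.
  replace ((u x * / z + v x * z) * z) with (v x * z ^ 2 + u x) by (field; lra). lra. }
assert (HG : G x (tm x)). { apply CT; auto. intros s Hs. apply Hform. unfold Rmin, Rmax in Hs; destruct Rle_dec in Hs; lra. }
split; auto. split; auto. split.
- intros s Hs. apply (seg_B x (tm x) HG). intros r Hr. apply Hform. unfold Rmin, Rmax in Hr; destruct Rle_dec in Hr; lra.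
  unfold Rmin, Rmax; destruct Rle_dec; lra.
- unfold en. destruct (OF x _ HG) as [HL _]. rewrite HL. fold Z in EZ. rewrite EZ.
  assert (Z > 0) by (unfold Z; apply Rdiv_lt_0_compat; lra).
  replace (exp (tm x)) with (/ Z) by (rewrite <- EZ, exp_Ropp, Rinv_inv; auto).
  apply Rmult_eq_reg_r with Z; [|lra].
  replace ((u x * / Z + v x * Z) * Z) with (v x * Z ^ 2 + u x) by (field; lra). lra.
Qed.

Lemma INFp x : BL x -> u x = 0 -> forall t, 0 <= t -> G x t /\ forall s, 0 <= s <= t -> B (phi s x).
Proof.
intros H Hu t Ht. destruct (UV x H) as [_ Hv]. pose proof H as [Bx _]. pose proof Bx as [_ Hl]. rewrite L1_uv in Hl.
assert (Hform : forall s, Rmin 0 t <= s <= Rmax 0 t -> u x * exp s + v x * exp (- s) <= delta).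
{ intros s Hs. rewrite Rmin_left, Rmax_right in Hs by lra. rewrite Hu.
  assert (exp (-s) <= 1) by (rewrite <- exp_0; apply exp_le; lra). nra. }
assert (HG : G x t) by (apply CT; auto).
split; auto. intros s Hs. apply (seg_B x t HG Hform). rewrite Rmin_left, Rmax_right; lra.
Qed.

Lemma INFm x : BL x -> v x = 0 -> forall t, t <= 0 -> G x t /\ forall s, t <= s <= 0 -> B (phi s x).
Proof.
intros H Hv t Ht. destruct (UV x H) as [Hu _]. pose proof H as [Bx _]. pose proof Bx as [_ Hl]. rewrite L1_uv in Hl.
assert (Hform : forall s, Rmin 0 t <= s <= Rmax 0 t -> u x * exp s + v x * exp (- s) <= delta).
{ intros s Hs. rewrite Rmin_right, Rmax_left in Hs by lra. rewrite Hv.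
  assert (exp s <= 1) by (rewrite <- exp_0; apply exp_le; lra). nra. }
assert (HG : G x t) by (apply CT; auto).
split; auto. intros s Hs. apply (seg_B x t HG Hform). rewrite Rmin_right, Rmax_left; lra.
Qed.

Lemma N_closed z : m_closure M N z -> N z.
Proof.
intros Hc. apply NNPP. intros Nz.
set (U := fun (n : nat) y => / INR (S n) < d y z).
destruct (Hcomp nat U) as [l Hl].
- intros n y Hy. exists (d y z - / INR (S n)). split. unfold U in Hy; lra.
  intros w Hw. unfold U in *. pose proof (d_tri y w z). rewrite (d_sym y w) in H. lra.
- intros y Ny. assert (Hyz : d y z > 0).
  { destruct (Rle_lt_or_eq_dec 0 (d y z) (d_pos y z)) as [H|H]; auto.
    exfalso. symmetry in H. apply dist_refl in H. subst. auto. }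
  destruct (archimed_cor1 (d y z) Hyz) as [n [Hn Hn0]].
  exists (pred n). unfold U. replace (S (pred n)) with n by lia. auto.
- destruct (list_ub (fun n => INR (S n)) l) as [K HK].
  set (K' := Rmax K 1). assert (HK1 := Rmax_r K 1). assert (HK2 := Rmax_l K 1).
  destruct (Hc (/ K')) as [y [Ny Hy]]. apply Rinv_0_lt_compat. unfold K'; lra.
  destruct (Hl y Ny) as [n [Hin Hu]]. unfold U in Hu.
  assert (INR (S n) <= K') by (specialize (HK n Hin); cbv beta in HK; unfold K'; lra).
  assert (/ K' <= / INR (S n)). { apply Rinv_le_contravar; auto. apply lt_0_INR; lia. }
  lra.
Qed.

Lemma bd_sub z : m_boundary M B z -> BL z /\ L1 z = delta.
Proof.
intros [Hcl Hni].
assert (Nz : N z). { apply N_closed. intros e He. destruct (Hcl e He) as [y [[Ny _] Hy]]. eauto. }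
assert (Lz : L1 z <= delta).
{ apply Rnot_lt_le. intros Hlt. destruct (HL1c z Nz (L1 z - delta)) as [r [Hr Hc]]. lra.
  destruct (Hcl r Hr) as [y [[Ny Ly] Hy]]. specialize (Hc y Ny Hy). apply Rabs_lt_between in Hc. lra. }
assert (Lz2 : L1 z = delta).
{ destruct (Rle_lt_or_eq_dec _ _ Lz) as [Hlt|]; auto. exfalso. apply Hni.
  destruct (HBint z Nz Lz) as [e0 [He0 HN]].
  destruct (HL1c z Nz (delta - L1 z)) as [r [Hr Hc]]. lra.
  exists (Rmin e0 r). split. apply Rmin_pos; auto. intros y Hy.
  assert (Hm1 := Rmin_l e0 r). assert (Hm2 := Rmin_r e0 r).
  assert (Ny : N y) by (apply HN; lra). split; auto.
  specialize (Hc y Ny ltac:(lra)). apply Rabs_lt_between in Hc. lra. }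
split; auto. split. split; auto. intros HL. rewrite HL10 in Lz2; auto. lra.
Qed.

Lemma bd_intro z : BL z -> L1 z = delta -> m_boundary M B z.
Proof.
intros Hz Lz. split.
- intros e He. exists z. split. apply Hz. rewrite d_self; auto.
- intros [e [He Hi]].
  destruct (UV z Hz) as [Hu Hv]. pose proof Hz as [[Nz _] _].
  destruct (window z e (HBint z Nz ltac:(lra)) He) as [e1 [He1 Hw]].
  set (t := if Rle_dec (v z) (u z) then e1 / 2 else - (e1 / 2)).
  assert (Ht : Rabs t < e1). { unfold t. destruct Rle_dec. rewrite Rabs_right; lra. rewrite Rabs_Ropp, Rabs_right; lra. }
  assert (HG : G z t). { apply G_intro. intros s Hs. destruct (Hw z s) as [G1 [I1 _]].
    rewrite d_self; auto. unfold Rmin, Rmax in Hs. destruct Rle_dec in Hs; apply Rabs_lt_between; apply Rabs_lt_between in Ht; lra. auto. }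
  destruct (Hw z t) as [_ [_ Hd]]. rewrite d_self; auto. auto.
  destruct (Hi _ Hd) as [_ Hle]. destruct (OF z t HG) as [HL _]. rewrite HL in Hle.
  rewrite L1_uv in Lz.
  pose proof (exp_mp t) as Hinvt.
  unfold t in *. destruct Rle_dec.
  + assert (exp (e1/2) > 1) by (rewrite <- exp_0; apply exp_increasing; lra).
    set (p := exp (e1/2)) in *. assert (Hp : exp (- (e1/2)) = / p) by (unfold p; rewrite exp_Ropp; auto).
    rewrite Hp in Hle. assert (u z > 0) by lra.
    assert (u z * p + v z * / p > u z + v z).
    { apply Rmult_lt_reg_r with p. lra. replace ((u z * p + v z * / p) * p) with (u z * p * p + v z) by (field; lra).
      clearbody p. assert (u z * p - v z > 0) by nra. nra. }
    lra.
  + assert (exp (e1/2) > 1) by (rewrite <- exp_0; apply exp_increasing; lra).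
    set (p := exp (e1/2)) in *. assert (Hp : exp (- (e1/2)) = / p) by (unfold p; rewrite exp_Ropp; auto).
    rewrite Ropp_involutive in Hle. rewrite Hp in Hle. fold p in Hle. assert (v z > 0) by lra.
    assert (u z * / p + v z * p > u z + v z).
    { apply Rmult_lt_reg_r with p. lra. replace ((u z * / p + v z * p) * p) with (v z * p * p + u z) by (field; lra).
      clearbody p. assert (v z * p - u z > 0) by nra. nra. }
    lra.
Qed.

Lemma bounded_on (S : X -> Prop) (g : X -> R) : (forall y, S y -> N y) -> m_continuous_on M S g ->
  (forall y, N y -> ~ S y -> exists r, r > 0 /\ forall z, S z -> d z y >= r) ->
  exists K, forall y, S y -> Rabs (g y) <= K.
Proof.
intros HSN Hc Hsep.
set (P := fun p : X * R * R => snd (fst p) > 0 /\ forall z, S z -> d z (fst (fst p)) < snd (fst p) -> Rabs (g z) <= snd p).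
set (I := sig P).
set (U := fun (i : I) z => d z (fst (fst (proj1_sig i))) < snd (fst (proj1_sig i))).
destruct (Hcomp I U) as [l Hl].
- intros i. apply ball_open.
- intros z Nz. destruct (classic (S z)) as [Sz|Sz].
  + destruct (Hc z Sz 1 ltac:(lra)) as [r [Hr H]].
    assert (Pz : P (z, r, Rabs (g z) + 1)).
    { split; simpl; auto. intros w Sw Hw. specialize (H w Sw Hw).
      pose proof (Rabs_triang_inv (g w) (g z)). lra. }
    exists (exist P _ Pz). unfold U; simpl. rewrite d_self; auto.
  + destruct (Hsep z Nz Sz) as [r [Hr H]].
    assert (Pz : P (z, r, 0)).
    { split; simpl; auto. intros w Sw Hw. specialize (H w Sw). lra. }
    exists (exist P _ Pz). unfold U; simpl. rewrite d_self; auto.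
- destruct (list_ub (fun i : I => snd (proj1_sig i)) l) as [K HK].
  exists K. intros y Sy. destruct (Hl y (HSN y Sy)) as [i [Hin Hu]].
  specialize (HK i Hin). clear Hin. destruct i as [[[z r] k] [Hr H]]. simpl in *. unfold U in Hu; simpl in Hu.
  specialize (H y Sy Hu). lra.
Qed.

Lemma B_sep y : N y -> ~ B y -> exists r, r > 0 /\ forall z, B z -> d z y >= r.
Proof.
intros Ny Hn. assert (Hl : L1 y > delta) by (apply Rnot_le_lt; intros H; apply Hn; split; auto).
destruct (HL1c y Ny (L1 y - delta)) as [r [Hr H]]. lra.
exists r. split; auto. intros z [Nz Lz]. apply Rnot_lt_ge. intros Hd.
specialize (H z Nz Hd). apply Rabs_lt_between in H. lra.
Qed.

Lemma bounded_B g : m_continuous_on M B g -> exists K, forall y, B y -> Rabs (g y) <= K.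
Proof.
intros Hc. apply bounded_on; auto. intros y [Ny _]; auto. apply B_sep.
Qed.

Lemma bounded_f_gen g : m_continuous_on M (m_boundary M B) g ->
  exists K, forall y, m_boundary M B y -> Rabs (g y) <= K.
Proof.
intros Hc. apply bounded_on; auto.
- intros y Hy. destruct (bd_sub y Hy) as [[[Ny _] _] _]; auto.
- intros y Ny Hn. destruct (classic (B y)) as [By|By].
  + assert (Hi : m_interior M B y).
    { apply NNPP. intros Hi. apply Hn. split; auto. intros e He. exists y. split; auto. rewrite d_self; auto. }
    destruct Hi as [e [He Hi]]. exists (e / 2). split. lra.
    intros z [_ Hz]. apply Rnot_lt_ge. intros Hd. apply Hz. exists (e / 2). split. lra.
    intros w Hw. apply Hi. pose proof (d_tri w z y). lra.
  + destruct (B_sep y Ny By) as [r [Hr H]]. exists r. split; auto.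
    intros z Hz. apply H. destruct (bd_sub z Hz) as [[Bz _] _]; auto.
Qed.

Hypothesis Ha_pos : forall x, BL x -> a x > 0.
Hypothesis Ha_cont : m_continuous_on M BL a.
Hypothesis Ha_der : forall x, BL x -> orb_deriv M Gamma phi BL a x 0.
Hypothesis Hm : m > 0.
Hypothesis Hma : forall x, BL x -> m <= a x.
Hypothesis Hfc : m_continuous_on M (m_boundary M B) f.

Lemma form_q x s : u x * exp s + v x * exp (- s) <= delta <-> u x * (exp s) ^ 2 - delta * exp s + v x <= 0.
Proof.
pose proof (exp_pos s). rewrite exp_Ropp.
assert (E : (u x * exp s + v x * / exp s) * exp s = u x * (exp s) ^ 2 + v x) by (field; lra).
split; intros H'.
- assert ((u x * exp s + v x * / exp s) * exp s <= delta * exp s) by (apply Rmult_le_compat_r; lra). lra.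
- apply Rmult_le_reg_r with (exp s); auto. lra.
Qed.

Lemma seg_conv x t : BL x -> G x t -> B (phi t x) -> forall s, Rmin 0 t <= s <= Rmax 0 t -> B (phi s x).
Proof.
intros H HG Bt. apply (seg_B x t HG).
destruct (UV x H) as [Hu Hv].
assert (Q0 : u x * (exp 0) ^ 2 - delta * exp 0 + v x <= 0).
{ rewrite exp_0. destruct H as [[_ Hl] _]. rewrite L1_uv in Hl. lra. }
assert (Qt : u x * (exp t) ^ 2 - delta * exp t + v x <= 0).
{ apply form_q. destruct (OF x t HG) as [HL _]. rewrite <- HL. apply Bt. }
intros s Hs. apply form_q. unfold Rmin, Rmax in Hs. destruct Rle_dec in Hs.
- apply quad_convex with (exp 0) (exp t); auto; lra || (split; apply exp_le; lra).
- apply quad_convex with (exp t) (exp 0); auto; lra || (split; apply exp_le; lra).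
Qed.

Lemma AC x T : BL x -> G x T -> B (phi T x) -> a (phi T x) = a x.
Proof.
intros H HG BT.
assert (Hseg := seg_conv x T H HG BT).
set (p := Rmin 0 T). set (q := Rmax 0 T).
assert (Hpq : p <= q) by (unfold p, q, Rmin, Rmax; destruct Rle_dec; lra).
assert (BLs : forall s, p <= s <= q -> Gamma s x /\ BL (phi s x)).
{ intros s Hs. destruct (G_between x T s HG Hs) as [Gs _]. split; auto. apply BL_of_B; auto. }
assert (E := const_on (fun s => a (phi s x)) p q Hpq).
assert (Hpq' : a (phi p x) = a (phi q x)).
{ apply E.
  - intros s Hs. destruct (BLs s ltac:(lra)) as [Gs BLs'].
    apply D1 with BL; auto.
    + exists (Rmin (s - p) (q - s)). split. apply Rmin_pos; lra.
      intros h Hh. assert (Hm1 := Rmin_l (s - p) (q - s)). assert (Hm2 := Rmin_r (s - p) (q - s)).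
      apply Rabs_lt_between in Hh. apply BLs. lra.
  - intros s Hs eps Heps. destruct (BLs s Hs) as [Gs BLs'].
    destruct (Ha_cont _ BLs' eps Heps) as [r [Hr Hc]].
    destruct (orbit_cont x s Gs r Hr) as [eta [Heta Ho]].
    exists eta. split; auto. intros r' Hr' Hd. destruct (BLs r' Hr') as [Gr BLr].
    apply Hc; auto. }
unfold p, q, Rmin, Rmax in Hpq'. destruct Rle_dec in Hpq'; rewrite (pf_id _ _ _ HF) in Hpq'; auto.
Qed.

Lemma OI x t : BL x -> G x t -> B (phi t x) ->
  BL (phi t x) /\ u (phi t x) = exp t * u x /\ v (phi t x) = exp (- t) * v x /\
  a (phi t x) = a x /\ Dq (phi t x) = Dq x /\ Ep (phi t x) = exp t * Ep x /\ Em (phi t x) = exp (- t) * Em x.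
Proof.
intros H HG Bt.
destruct (G_between x t t HG) as [Gt _]. unfold Rmin, Rmax; destruct Rle_dec; lra.
destruct (OF x t HG) as [E1 E2].
assert (Eu : u (phi t x) = exp t * u x) by (change (u (phi t x)) with ((L1 (phi t x) + Ld (phi t x)) / 2); rewrite E1, E2; field).
assert (Ev : v (phi t x) = exp (- t) * v x) by (change (v (phi t x)) with ((L1 (phi t x) - Ld (phi t x)) / 2); rewrite E1, E2; field).
pose proof (exp_mp t) as Hi.
assert (ED : Dq (phi t x) = Dq x).
{ unfold Dq. rewrite Eu, Ev. f_equal. replace (4 * (exp t * u x) * (exp (- t) * v x)) with (4 * u x * v x * (exp (-t) * exp t)) by ring.
  rewrite Hi. ring. }
split. apply BL_of_B; auto. split; auto. split; auto. split. apply AC; auto.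
split; auto. split.
- unfold Ep. rewrite ED, Eu. unfold Rdiv. ring.
- unfold Em. rewrite ED, Ev. unfold Rdiv. ring.
Qed.

Lemma en_inv x t : BL x -> v x > 0 -> G x t -> B (phi t x) -> en (phi t x) = en x.
Proof.
intros H Hv HG Bt. destruct (OI x t H HG Bt) as [_ [_ [_ [_ [_ [_ HEm]]]]]].
destruct (EN x H Hv) as [Htm [HGm _]].
destruct (G_between x _ (tm x) HGm) as [Gm _]. unfold Rmin, Rmax; destruct Rle_dec; lra.
destruct (G_between x t t HG) as [Gt _]. unfold Rmin, Rmax; destruct Rle_dec; lra.
destruct (Ep_Em_bounds x H) as [_ [E1 E2]].
assert (Em0 : 0 < Em x). { unfold Em. destruct (Dq_props x H). apply Rdiv_lt_0_compat; lra. }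
assert (Et : tm (phi t x) = - t + tm x).
{ unfold tm. rewrite HEm. rewrite ln_mult. rewrite ln_exp. auto. apply exp_pos. auto. }
unfold en. rewrite Et. rewrite phishift; auto. f_equal. ring. replace (- t + tm x + t) with (tm x) by ring. auto.
Qed.

Lemma ex_inv x t : BL x -> u x > 0 -> G x t -> B (phi t x) -> ex (phi t x) = ex x.
Proof.
intros H Hu HG Bt. destruct (OI x t H HG Bt) as [_ [_ [_ [_ [_ [HEp _]]]]]].
destruct (EX x H Hu) as [Htp [HGp _]].
destruct (G_between x _ (tp x) HGp) as [Gp _]. unfold Rmin, Rmax; destruct Rle_dec; lra.
destruct (G_between x t t HG) as [Gt _]. unfold Rmin, Rmax; destruct Rle_dec; lra.
assert (Ep0 : 0 < Ep x). { unfold Ep. destruct (Dq_props x H). destruct (UV x H). apply Rdiv_lt_0_compat; lra. }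
assert (Et : tp (phi t x) = - t + tp x).
{ unfold tp. rewrite HEp. rewrite ln_mult. rewrite ln_exp. ring. apply exp_pos. auto. }
unfold ex. rewrite Et. rewrite phishift; auto. f_equal. ring. replace (- t + tp x + t) with (tp x) by ring. auto.
Qed.


Lemma alg1 p q : 0<=p<=1 -> 0<=q<=1 -> 0 <= 1 - p^2*q^2 /\ (1 - p^2*q^2 = 0 -> p = 1 /\ q = 1).
Proof. intros. assert (p*q <= 1) by nra. assert (0 <= p*q) by nra. split. nra. intros.
assert (p*q = 1) by nra. split; nra. Qed.
Lemma alg2 p q : 0<=p<=1 -> 0<=q<=1 -> 1 - p^2*q^2 <> 0 ->
  0 <= q*(1-p^2)/(1-p^2*q^2) <= 1 /\ 0 <= p*(1-q^2)/(1-p^2*q^2) <= 1 /\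
  q*(1-p^2)/(1-p^2*q^2) + p*(1-q^2)/(1-p^2*q^2) = (p+q)/(1+p*q).
Proof. intros Hp Hq Hd. destruct (alg1 p q Hp Hq) as [H0 _].
assert (D : 0 < 1 - p^2*q^2) by lra.
assert (p2 : 0 <= p^2 <= 1) by (simpl; nra). assert (q2 : 0 <= q^2 <= 1) by (simpl; nra).
assert (pq1 : p * q < 1). { assert (p*q <= 1) by nra. destruct (Req_dec (p*q) 1). exfalso; apply Hd. replace (p^2*q^2) with ((p*q)^2) by ring. rewrite H1. ring. lra. }
assert (A1 : 0 <= q * (1 - p^2)) by (apply Rmult_le_pos; lra).
assert (A2 : 0 <= p * (1 - q^2)) by (apply Rmult_le_pos; lra).
assert (A3 : q * (1 - p^2) <= 1 - p^2 * q^2).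
{ assert (q * (1 - p^2) <= 1 * (1-p^2)) by (apply Rmult_le_compat_r; lra).
  assert (p^2 * q^2 <= p^2 * 1) by (apply Rmult_le_compat_l; lra). lra. }
assert (A4 : p * (1 - q^2) <= 1 - p^2 * q^2).
{ assert (p * (1 - q^2) <= 1 * (1-q^2)) by (apply Rmult_le_compat_r; lra).
  assert (p^2 * q^2 <= 1 * q^2) by (apply Rmult_le_compat_r; lra). lra. }
split; [|split].
- split. apply Rdiv_le_0_compat; lra. apply Rmult_le_reg_r with (1 - p^2*q^2); auto.
  unfold Rdiv. rewrite Rmult_assoc, Rinv_l by lra. lra.
- split. apply Rdiv_le_0_compat; lra. apply Rmult_le_reg_r with (1 - p^2*q^2); auto.
  unfold Rdiv. rewrite Rmult_assoc, Rinv_l by lra. lra.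
- assert (0 <= p * q) by (apply Rmult_le_pos; lra).
  field. split. lra. intros E. assert (1 - p^2*q^2 = (1 - p*q)*(1+p*q)) by ring. lra.
Qed.


Definition pw (E al : R) := if Rlt_dec 0 E then exp (al * ln E) else 0.

Lemma pw_range E al : 0 <= E <= 1 -> al > 0 -> 0 <= pw E al <= 1.
Proof.
intros HE Hal. unfold pw. destruct Rlt_dec; [|lra].
split. left; apply exp_pos. rewrite <- exp_0. apply exp_le.
assert (ln E <= ln 1) by (apply ln_le; lra). rewrite ln_1 in H. nra.
Qed.

Lemma pw_pos E al : 0 < E -> pw E al > 0.
Proof. intros H. unfold pw. destruct Rlt_dec; [apply exp_pos|lra]. Qed.

Lemma pw_zero al : pw 0 al = 0.
Proof. unfold pw. destruct Rlt_dec; lra. Qed.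

Lemma pw_one E al : 0 <= E <= 1 -> al > 0 -> pw E al = 1 -> E = 1.
Proof.
intros HE Hal H. unfold pw in H. destruct Rlt_dec; [|lra].
rewrite <- exp_0 in H. apply exp_inv in H.
assert (ln E = 0). { apply Rmult_eq_reg_l with al. rewrite H; ring. lra. }
rewrite <- (exp_ln E) by auto. rewrite H0. apply exp_0.
Qed.

Lemma pw_1 al : pw 1 al = 1.
Proof. unfold pw. destruct Rlt_dec; [|lra]. rewrite ln_1, Rmult_0_r, exp_0. auto. Qed.

Lemma pw_mult E al s : 0 <= E -> pw (exp s * E) al = exp (al * s) * pw E al.
Proof.
intros HE. unfold pw. pose proof (exp_pos s).
destruct (Rlt_dec 0 E) as [H1|H1]; destruct (Rlt_dec 0 (exp s * E)) as [H2|H2].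
- rewrite ln_mult, ln_exp by auto. rewrite <- exp_plus. f_equal. ring.
- exfalso; apply H2; apply Rmult_lt_0_compat; auto.
- exfalso. assert (E = 0) by lra. subst. lra.
- ring.
Qed.

Lemma pw_le_m E al : 0 < E <= 1 -> m <= al -> pw E al <= exp (m * ln E).
Proof.
intros HE Hal. unfold pw. destruct Rlt_dec; [|lra]. apply exp_le.
assert (ln E <= ln 1) by (apply ln_le; lra). rewrite ln_1 in H. nra.
Qed.

Definition Pp x := pw (Ep x) (a x).
Definition Pm x := pw (Em x) (a x).
Definition den x := 1 - Pp x ^ 2 * Pm x ^ 2.
Definition c1 x := if Req_EM_T (den x) 0 then / 2 else Pm x * (1 - Pp x ^ 2) / den x.
Definition c2 x := if Req_EM_T (den x) 0 then / 2 else Pp x * (1 - Pm x ^ 2) / den x.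
Definition L2 x := if excluded_middle_informative (BL x) then c1 x * f (en x) + c2 x * f (ex x) else 0.
Definition K1 x := (f (ex x) * Pp x - f (en x) * Pm x * Pp x ^ 2) / den x.
Definition K2 x := (f (en x) * Pm x - f (ex x) * Pp x * Pm x ^ 2) / den x.
Definition L2d x := if excluded_middle_informative (BL x) then a x * (K1 x - K2 x) else 0.

Lemma sq_eq a0 b0 : 0 <= a0 -> 0 <= b0 -> a0 ^ 2 = b0 ^ 2 -> a0 = b0.
Proof.
intros Ha Hb E. assert ((a0 - b0) * (a0 + b0) = 0) by (simpl in E; lra).
apply Rmult_integral in H. destruct H; lra.
Qed.

Lemma P_range x : BL x -> 0 <= Pp x <= 1 /\ 0 <= Pm x <= 1.
Proof.
intros H. destruct (Ep_Em_bounds x H) as [E1 E2]. pose proof (Ha_pos x H).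
split; apply pw_range; auto.
Qed.

Lemma den_props x : BL x -> 0 <= den x /\ (den x = 0 -> Pp x = 1 /\ Pm x = 1).
Proof.
intros H. destruct (P_range x H) as [A B]. unfold den. apply alg1; auto.
Qed.

Lemma c_props x : BL x -> den x <> 0 ->
  0 <= c1 x <= 1 /\ 0 <= c2 x <= 1 /\ c1 x + c2 x = (Pp x + Pm x) / (1 + Pp x * Pm x).
Proof.
intros H Hd. destruct (P_range x H) as [A B].
unfold c1, c2. destruct Req_EM_T; [contradiction|]. unfold den in *. apply alg2; auto.
Qed.

Lemma tang x : BL x -> den x = 0 -> Ep x = 1 /\ Em x = 1.
Proof.
intros H Hd. destruct (den_props x H) as [_ Hd']. destruct (Hd' Hd) as [H1 H2].
pose proof (Ha_pos x H). destruct (Ep_Em_bounds x H).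
split; eapply pw_one; eauto.
Qed.

Lemma en_tang x : Em x = 1 -> en x = x.
Proof. intros H. unfold en, tm. rewrite H, ln_1. apply (pf_id _ _ _ HF). Qed.
Lemma ex_tang x : Ep x = 1 -> ex x = x.
Proof. intros H. unfold ex, tp. rewrite H, ln_1, Ropp_0. apply (pf_id _ _ _ HF). Qed.

Lemma L2_BL x : BL x -> L2 x = c1 x * f (en x) + c2 x * f (ex x).
Proof. intros H. unfold L2. destruct excluded_middle_informative; tauto. Qed.
Lemma L2d_BL x : BL x -> L2d x = a x * (K1 x - K2 x).
Proof. intros H. unfold L2d. destruct excluded_middle_informative; tauto. Qed.

Lemma L2_K x : BL x -> den x <> 0 -> L2 x = K1 x + K2 x.
Proof.
intros H Hd. rewrite L2_BL by auto. unfold c1, c2, K1, K2. destruct Req_EM_T; [contradiction|].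
field. auto.
Qed.

Lemma L2_Lam x : Lam x -> L2 x = 0.
Proof. intros H. unfold L2. destruct excluded_middle_informative as [[_ H']|]; tauto. Qed.

Lemma boundary_cond x : m_boundary M B x -> L2 x = f x.
Proof.
intros Hb. destruct (bd_sub x Hb) as [H Hl].
destruct (UV x H) as [Hu Hv]. rewrite L1_uv in Hl.
destruct (Dq_props x H) as [HD1 HD2].
rewrite L2_BL by auto.
assert (Hd2 : Dq x ^ 2 = (u x - v x) ^ 2) by (rewrite HD2, <- Hl; ring).
destruct (Req_EM_T (den x) 0) as [Hd|Hd].
- destruct (tang x H Hd) as [E1 E2]. rewrite en_tang, ex_tang by auto.
  unfold c1, c2. destruct Req_EM_T; [|contradiction]. field.
- destruct (Rle_dec (v x) (u x)) as [Huv|Huv].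
  + assert (Dq x = u x - v x).
    { apply sq_eq; auto. lra. }
    assert (E1 : Ep x = 1). { unfold Ep. rewrite H0, <- Hl. field. intro; lra. }
    assert (Pp x = 1). { unfold Pp. rewrite E1. apply pw_1. }
    rewrite ex_tang by auto. unfold c1, c2. destruct Req_EM_T; [contradiction|].
    unfold den in *. rewrite H1 in *. field. intro Hc; apply Hd; rewrite <- Hc; ring.
  + apply Rnot_le_lt in Huv. assert (Dq x = v x - u x).
    { apply sq_eq; auto. lra. rewrite Hd2. ring. }
    assert (E1 : Em x = 1). { unfold Em. rewrite H0, <- Hl. field. intro; lra. }
    assert (Pm x = 1). { unfold Pm. rewrite E1. apply pw_1. }
    rewrite en_tang by auto. unfold c1, c2. destruct Req_EM_T; [contradiction|].
    unfold den in *. rewrite H1 in *. field. intro Hc; apply Hd; rewrite <- Hc; ring.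
Qed.

Lemma dpos x : BL x -> delta + Dq x > 0.
Proof. intros H. destruct (Dq_props x H). lra. Qed.

Lemma Ep_pos x : BL x -> (u x > 0 -> Ep x > 0) /\ (u x = 0 -> Ep x = 0).
Proof. intros H. pose proof (dpos x H). unfold Ep. split; intros Hu. apply Rdiv_lt_0_compat; lra. rewrite Hu. unfold Rdiv. ring. Qed.
Lemma Em_pos x : BL x -> (v x > 0 -> Em x > 0) /\ (v x = 0 -> Em x = 0).
Proof. intros H. pose proof (dpos x H). unfold Em. split; intros Hu. apply Rdiv_lt_0_compat; lra. rewrite Hu. unfold Rdiv. ring. Qed.

Lemma en_bd x : BL x -> v x > 0 -> m_boundary M B (en x) /\ BL (en x) /\ Gamma (tm x) x.
Proof.
intros H Hv. destruct (EN x H Hv) as [Htm [HG [HB HL]]].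
destruct (G_between x _ (tm x) HG) as [Gm _]. unfold Rmin, Rmax; destruct Rle_dec; lra.
assert (BLe : BL (en x)). { apply BL_of_B; auto. apply HB. lra. }
split; auto. apply bd_intro; auto.
Qed.

Lemma ex_bd x : BL x -> u x > 0 -> m_boundary M B (ex x) /\ BL (ex x) /\ Gamma (tp x) x.
Proof.
intros H Hu. destruct (EX x H Hu) as [Htp [HG [HB HL]]].
destruct (G_between x _ (tp x) HG) as [Gp _]. unfold Rmin, Rmax; destruct Rle_dec; lra.
assert (BLe : BL (ex x)). { apply BL_of_B; auto. apply HB. lra. }
split; auto. apply bd_intro; auto.
Qed.

Lemma fex_eq x t : BL x -> G x t -> B (phi t x) ->
  f (ex (phi t x)) * Pp (phi t x) = f (ex x) * Pp x * exp (a x * t).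
Proof.
intros H HG Bt. destruct (OI x t H HG Bt) as [_ [_ [_ [Ea [_ [HEp _]]]]]].
destruct (UV x H) as [Hu _]. destruct (Ep_Em_bounds x H) as [[E1 _] _].
unfold Pp at 1. rewrite Ea, HEp, pw_mult by auto.
destruct (Rle_lt_or_eq_dec _ _ Hu) as [Hu'|Hu'].
- rewrite ex_inv by auto. fold (Pp x). ring.
- symmetry in Hu'. rewrite (proj2 (Ep_pos x H) Hu'). unfold Pp. rewrite (proj2 (Ep_pos x H) Hu'), pw_zero. ring.
Qed.

Lemma fen_eq x t : BL x -> G x t -> B (phi t x) ->
  f (en (phi t x)) * Pm (phi t x) = f (en x) * Pm x * exp (a x * (- t)).
Proof.
intros H HG Bt. destruct (OI x t H HG Bt) as [_ [_ [_ [Ea [_ [_ HEm]]]]]].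
destruct (UV x H) as [_ Hv]. destruct (Ep_Em_bounds x H) as [_ [E1 _]].
unfold Pm at 1. rewrite Ea, HEm, pw_mult by auto.
destruct (Rle_lt_or_eq_dec _ _ Hv) as [Hv'|Hv'].
- rewrite en_inv by auto. fold (Pm x). ring.
- symmetry in Hv'. rewrite (proj2 (Em_pos x H) Hv'). unfold Pm. rewrite (proj2 (Em_pos x H) Hv'), pw_zero. ring.
Qed.

Lemma L2_orbit x t : BL x -> den x <> 0 -> G x t -> B (phi t x) ->
  L2 (phi t x) = K1 x * exp (a x * t) + K2 x * exp (- (a x) * t) /\
  L2d (phi t x) = a x * (K1 x * exp (a x * t) - K2 x * exp (- (a x) * t)).
Proof.
intros H Hd HG Bt. destruct (OI x t H HG Bt) as [BLt [_ [_ [Ea [_ [HEp HEm]]]]]].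
pose proof (fex_eq x t H HG Bt) as F1. pose proof (fen_eq x t H HG Bt) as F2.
destruct (Ep_Em_bounds x H) as [[E1 _] [E2 _]].
assert (HPp : Pp (phi t x) = exp (a x * t) * Pp x). { unfold Pp. rewrite Ea, HEp, pw_mult; auto. }
assert (HPm : Pm (phi t x) = exp (a x * (- t)) * Pm x). { unfold Pm. rewrite Ea, HEm, pw_mult; auto. }
assert (Hee : exp (a x * t) * exp (a x * (- t)) = 1).
{ rewrite <- exp_plus. replace (a x * t + a x * (- t)) with 0 by ring. apply exp_0. }
assert (Hden : den (phi t x) = den x).
{ unfold den. rewrite HPp, HPm.
  replace ((exp (a x * t) * Pp x) ^ 2 * (exp (a x * - t) * Pm x) ^ 2) with
    ((exp (a x * t) * exp (a x * - t)) ^ 2 * (Pp x ^ 2 * Pm x ^ 2)) by ring. rewrite Hee. ring. }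
assert (EK1 : K1 (phi t x) = K1 x * exp (a x * t)).
{ unfold K1. rewrite Hden.
  replace (f (ex (phi t x)) * Pp (phi t x) - f (en (phi t x)) * Pm (phi t x) * Pp (phi t x) ^ 2)
   with (f (ex (phi t x)) * Pp (phi t x) - (f (en (phi t x)) * Pm (phi t x)) * Pp (phi t x) ^ 2) by ring.
  rewrite F1, F2, HPp. field_simplify; auto.
  replace (exp (a x * - t)) with (/ exp (a x * t)).
  field. split; auto. pose proof (exp_pos (a x * t)); lra.
  rewrite <- exp_Ropp. f_equal. ring. }
assert (EK2 : K2 (phi t x) = K2 x * exp (- (a x) * t)).
{ unfold K2. rewrite Hden.
  replace (f (en (phi t x)) * Pm (phi t x) - f (ex (phi t x)) * Pp (phi t x) * Pm (phi t x) ^ 2)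
   with (f (en (phi t x)) * Pm (phi t x) - (f (ex (phi t x)) * Pp (phi t x)) * Pm (phi t x) ^ 2) by ring.
  rewrite F1, F2, HPm. replace (- a x * t) with (a x * - t) by ring.
  replace (exp (a x * t)) with (/ exp (a x * - t)).
  field. split; auto. pose proof (exp_pos (a x * - t)); lra.
  rewrite <- exp_Ropp. f_equal. ring. }
split.
- rewrite L2_K; auto. rewrite EK1, EK2. auto. rewrite Hden; auto.
- rewrite L2d_BL; auto. rewrite Ea, EK1, EK2. auto.
Qed.

Lemma orb_from_real (D : X -> Prop) (g : X -> R) (F : R -> R) x l :
  (exists e, e > 0 /\ forall t, t <> 0 -> Rabs t < e -> Gamma t x -> D (phi t x) -> g (phi t x) = F t) ->
  g x = F 0 -> derivable_pt_lim F 0 l -> orb_deriv M Gamma phi D g x l.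
Proof.
intros [e [He HE]] H0 Hd eps Heps. destruct (Hd eps Heps) as [del Hdl].
exists (Rmin e del). split. apply Rmin_pos; auto. apply cond_pos.
intros t Ht0 Ht Gt Dt. assert (Hm1 := Rmin_l e del). assert (Hm2 := Rmin_r e del).
rewrite HE, H0; auto; [|lra]. specialize (Hdl t Ht0 ltac:(lra)). rewrite Rplus_0_l in Hdl. auto.
Qed.

Lemma window_G x : BL x -> exists e, e > 0 /\ forall t, Rabs t < e -> G x t.
Proof.
intros [[Nx Lx] _]. destruct (window x 1 (HBint x Nx Lx) ltac:(lra)) as [e [He Hw]].
exists e. split; auto. intros t Ht. apply G_intro. intros s Hs.
destruct (Hw x s) as [G1 [I1 _]]; auto. rewrite d_self; auto.
unfold Rmin, Rmax in Hs; destruct Rle_dec in Hs; apply Rabs_lt_between; apply Rabs_lt_between in Ht; lra.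
Qed.

Lemma tang_noB x : BL x -> den x = 0 -> exists e, e > 0 /\ forall t, t <> 0 -> Rabs t < e -> ~ B (phi t x).
Proof.
intros H Hd. destruct (tang x H Hd) as [E1 E2]. destruct (window_G x H) as [e [He HG]].
exists e. split; auto. intros t Ht0 Ht Bt.
destruct (OF x t (HG t Ht)) as [HL _]. destruct Bt as [_ Lt]. rewrite HL in Lt.
pose proof (dpos x H). destruct (Dq_props x H) as [HD _].
assert (Hu : 2 * u x = delta + Dq x). { unfold Ep in E1. apply Rmult_eq_reg_r with (/ (delta + Dq x)).
  rewrite Rinv_r by lra. auto. apply Rinv_neq_0_compat. lra. }
assert (Hv : 2 * v x = delta + Dq x). { unfold Em in E2. apply Rmult_eq_reg_r with (/ (delta + Dq x)).
  rewrite Rinv_r by lra. auto. apply Rinv_neq_0_compat. lra. }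
assert (exp t <> 1). { intros E. apply Ht0. rewrite <- exp_0 in E. apply exp_inv in E. auto. }
pose proof (exp_pos t). rewrite exp_Ropp in Lt. set (p := exp t) in *. clearbody p.
assert (u x * p + v x * / p > delta).
{ apply Rmult_lt_reg_r with p; auto. replace ((u x * p + v x * / p) * p) with (u x * (p * p + 1)) by (field_simplify; [|lra]; rewrite <- Hu in Hv; field_simplify; lra).
  assert ((p - 1) * (p - 1) > 0). { assert (p - 1 <> 0) by lra. apply Rsqr_pos_lt in H3. unfold Rsqr in H3. auto. }
  assert (u x > 0) by lra. nra. }
lra.
Qed.

Lemma L2_deriv x : BL x -> orb_deriv M Gamma phi BL L2 x (L2d x) /\
   orb_deriv M Gamma phi BL L2d x (a x ^ 2 * L2 x).
Proof.
intros H. destruct (Req_EM_T (den x) 0) as [Hd|Hd].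
- destruct (tang_noB x H Hd) as [e [He Hn]].
  split; intros eps Heps; exists e; split; auto; intros t Ht0 Ht Gt BLt; exfalso; apply (Hn t); auto; apply BLt.
- destruct (window_G x H) as [e [He HG]].
  set (F := fun t => K1 x * exp (a x * t) + K2 x * exp (- (a x) * t)).
  set (F' := fun t => a x * (K1 x * exp (a x * t) - K2 x * exp (- (a x) * t))).
  assert (DF : derivable_pt_lim F 0 (L2d x)).
  { rewrite L2d_BL by auto. unfold F.
    apply (dl_eq _ _ (K1 x * (a x * exp (a x * 0)) + K2 x * (- a x * exp (- a x * 0)))).
    rewrite !Rmult_0_r, exp_0. ring.
    apply (dl_plus (fun t => K1 x * exp (a x * t)) (fun t => K2 x * exp (- a x * t))).
    - apply (dl_eq _ _ (0 * exp (a x * 0) + K1 x * (a x * exp (a x * 0)))). ring.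
      apply (dl_mult (fun _ => K1 x) (fun t => exp (a x * t))). apply dl_const. apply dl_explin.
    - apply (dl_eq _ _ (0 * exp (- a x * 0) + K2 x * (- a x * exp (- a x * 0)))). ring.
      apply (dl_mult (fun _ => K2 x) (fun t => exp (- a x * t))). apply dl_const. apply dl_explin. }
  assert (DF' : derivable_pt_lim F' 0 (a x ^ 2 * L2 x)).
  { rewrite L2_K by auto. unfold F'.
    apply (dl_eq _ _ (a x * (K1 x * (a x * exp (a x * 0)) - K2 x * (- a x * exp (- a x * 0))))).
    rewrite !Rmult_0_r, exp_0. ring.
    apply (dl_eq _ _ (0 * (K1 x * exp (a x * 0) - K2 x * exp (- a x * 0)) + a x * (K1 x * (a x * exp (a x * 0)) - K2 x * (- a x * exp (- a x * 0))))). ring.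
    apply (dl_mult (fun _ => a x) (fun t => K1 x * exp (a x * t) - K2 x * exp (- a x * t))). apply dl_const.
    apply (dl_minus (fun t => K1 x * exp (a x * t)) (fun t => K2 x * exp (- a x * t))).
    - apply (dl_eq _ _ (0 * exp (a x * 0) + K1 x * (a x * exp (a x * 0)))). ring.
      apply (dl_mult (fun _ => K1 x) (fun t => exp (a x * t))). apply dl_const. apply dl_explin.
    - apply (dl_eq _ _ (0 * exp (- a x * 0) + K2 x * (- a x * exp (- a x * 0)))). ring.
      apply (dl_mult (fun _ => K2 x) (fun t => exp (- a x * t))). apply dl_const. apply dl_explin. }
  split.
  + apply orb_from_real with F; auto.
    * exists e. split; auto. intros t _ Ht Gt BLt. apply (L2_orbit x t H Hd (HG t Ht) (proj1 BLt)).
    * unfold F. rewrite L2_K by auto. rewrite !Rmult_0_r, exp_0. ring.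
  + apply orb_from_real with F'; auto.
    * exists e. split; auto. intros t _ Ht Gt BLt. apply (L2_orbit x t H Hd (HG t Ht) (proj1 BLt)).
    * unfold F'. rewrite L2d_BL by auto. rewrite !Rmult_0_r, exp_0. ring.
Qed.

Lemma L2_pos : (forall x, m_boundary M B x -> f x > 0) -> forall x, BL x -> L2 x > 0.
Proof.
intros Hf x H. rewrite L2_BL by auto.
destruct (UV x H) as [Hu Hv]. destruct (P_range x H) as [[A1 A2] [B1 B2]].
destruct (Req_EM_T (den x) 0) as [Hd|Hd].
- destruct (tang x H Hd) as [E1 E2]. rewrite en_tang, ex_tang by auto.
  unfold c1, c2. destruct Req_EM_T; [|contradiction].
  assert (u x > 0 \/ v x > 0). { destruct H as [[Nx _] Lx]. pose proof (HL1p x Nx Lx). rewrite L1_uv in H. lra. }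
  assert (Hb : m_boundary M B x).
  { destruct H0 as [H0|H0].
    - pose proof (ex_bd x H H0) as [Hb _]. rewrite ex_tang in Hb; auto.
    - pose proof (en_bd x H H0) as [Hb _]. rewrite en_tang in Hb; auto. }
  pose proof (Hf x Hb). lra.
- destruct (c_props x H Hd) as [C1 [C2 C3]].
  assert (T1 : 0 <= c1 x * f (en x) /\ (c1 x > 0 -> c1 x * f (en x) > 0)).
  { destruct (Rle_lt_or_eq_dec _ _ Hv) as [Hv'|Hv'].
    - pose proof (Hf _ (proj1 (en_bd x H Hv'))). split. apply Rmult_le_pos; lra. intros; apply Rmult_lt_0_compat; lra.
    - symmetry in Hv'. assert (Pm x = 0) by (unfold Pm; rewrite (proj2 (Em_pos x H) Hv'); apply pw_zero).
      unfold c1. destruct Req_EM_T; [contradiction|]. rewrite H0. unfold Rdiv. split. lra. intros; lra. }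
  assert (T2 : 0 <= c2 x * f (ex x) /\ (c2 x > 0 -> c2 x * f (ex x) > 0)).
  { destruct (Rle_lt_or_eq_dec _ _ Hu) as [Hu'|Hu'].
    - pose proof (Hf _ (proj1 (ex_bd x H Hu'))). split. apply Rmult_le_pos; lra. intros; apply Rmult_lt_0_compat; lra.
    - symmetry in Hu'. assert (Pp x = 0) by (unfold Pp; rewrite (proj2 (Ep_pos x H) Hu'); apply pw_zero).
      unfold c2. destruct Req_EM_T; [contradiction|]. rewrite H0. unfold Rdiv. split. lra. intros; lra. }
  assert (Hs : Pp x + Pm x > 0).
  { pose proof H as [[Nx _] Lx]. pose proof (HL1p x Nx Lx) as H0'. rewrite L1_uv in H0'.
    assert (H0 : BL x) by auto.
    destruct (Rle_lt_or_eq_dec _ _ Hu) as [Hu'|Hu'].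
    - assert (Pp x > 0) by (unfold Pp; apply pw_pos; apply (Ep_pos x H0); auto). lra.
    - assert (Pm x > 0) by (unfold Pm; apply pw_pos; apply (Em_pos x H0); lra). lra. }
  assert (c1 x + c2 x > 0). { rewrite C3. apply Rdiv_lt_0_compat; auto. assert (0 <= Pp x * Pm x) by (apply Rmult_le_pos; lra). lra. }
  destruct (Rle_lt_or_eq_dec 0 (c1 x) (proj1 C1)) as [P1|P1].
  + pose proof (proj2 T1 P1). lra.
  + assert (c2 x > 0) by lra. pose proof (proj2 T2 H1). lra.
Qed.

Lemma ocont (g : X -> R) x s0 : m_continuous_on M B g -> Gamma s0 x -> B (phi s0 x) ->
  forall eps, eps > 0 -> exists eta, eta > 0 /\ forall s, Gamma s x -> B (phi s x) -> Rabs (s - s0) < eta ->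
    Rabs (g (phi s x) - g (phi s0 x)) < eps.
Proof.
intros Hc Gs Bs eps Heps. destruct (Hc _ Bs eps Heps) as [r [Hr H]].
destruct (orbit_cont x s0 Gs r Hr) as [eta [Heta Ho]].
exists eta. split; [auto|]. intros s G1 B1 Hs. apply H; auto.
Qed.

Lemma endpt_hi (h : R -> R) p q : p < q -> (forall s, p <= s < q -> h s = 0) ->
  (forall eps, eps > 0 -> exists eta, eta > 0 /\ forall s, p <= s <= q -> Rabs (s - q) < eta -> Rabs (h s - h q) < eps) ->
  h q = 0.
Proof.
intros Hpq H0 Hc. apply NNPP. intros Hn. assert (Ha : Rabs (h q) > 0) by (apply Rabs_pos_lt; auto).
destruct (Hc _ Ha) as [eta [Heta H]].
set (s := Rmax p (q - eta / 2)). assert (Hm1 : p <= s) by apply Rmax_l. assert (Hm2 : q - eta/2 <= s) by apply Rmax_r.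
assert (s < q) by (unfold s; apply Rmax_lub_lt; lra).
specialize (H s ltac:(lra)). rewrite H0 in H by lra. rewrite Rminus_0_l, Rabs_Ropp in H.
assert (Rabs (s - q) < eta) by (apply Rabs_lt_between; split; lra). specialize (H H2). lra.
Qed.

Lemma endpt_lo (h : R -> R) p q : p < q -> (forall s, p < s <= q -> h s = 0) ->
  (forall eps, eps > 0 -> exists eta, eta > 0 /\ forall s, p <= s <= q -> Rabs (s - p) < eta -> Rabs (h s - h p) < eps) ->
  h p = 0.
Proof.
intros Hpq H0 Hc. apply NNPP. intros Hn. assert (Ha : Rabs (h p) > 0) by (apply Rabs_pos_lt; auto).
destruct (Hc _ Ha) as [eta [Heta H]].
set (s := Rmin q (p + eta / 2)). assert (Hm1 : s <= q) by apply Rmin_l. assert (Hm2 : s <= p + eta/2) by apply Rmin_r.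
assert (p < s) by (unfold s; apply Rmin_glb_lt; lra).
specialize (H s ltac:(lra)). rewrite H0 in H by lra. rewrite Rminus_0_l, Rabs_Ropp in H.
assert (Rabs (s - p) < eta) by (apply Rabs_lt_between; split; lra). specialize (H H2). lra.
Qed.

Section Uniq.
Variables (g g' gd gd' : X -> R).
Hypothesis Hgc : m_continuous_on M B g.
Hypothesis Hgc' : m_continuous_on M B g'.
Hypothesis Hgd1 : forall x, BL x -> orb_deriv M Gamma phi BL g x (gd x).
Hypothesis Hgd2 : forall x, BL x -> orb_deriv M Gamma phi BL gd x (a x ^ 2 * g x).
Hypothesis Hgd1' : forall x, BL x -> orb_deriv M Gamma phi BL g' x (gd' x).
Hypothesis Hgd2' : forall x, BL x -> orb_deriv M Gamma phi BL gd' x (a x ^ 2 * g' x).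
Hypothesis Hbd : forall x, m_boundary M B x -> g x = g' x.

Definition Inn x s := (v x > 0 -> tm x < s) /\ (u x > 0 -> s < tp x).

Lemma seg_full x s : BL x -> Inn x s -> G x s /\ B (phi s x).
Proof.
intros H [H1 H2]. destruct (UV x H) as [Hu Hv].
destruct (Rle_dec 0 s) as [Hs|Hs].
- destruct (Rle_lt_or_eq_dec _ _ Hu) as [Hu'|Hu'].
  + destruct (EX x H Hu') as [Htp [HG [HB _]]]. specialize (H2 Hu').
    split; [|apply HB; lra]. apply G_intro. intros r Hr. apply (G_between x _ r HG).
    unfold Rmin, Rmax in *; destruct (Rle_dec 0 s); destruct (Rle_dec 0 (tp x)); lra.
  + symmetry in Hu'. destruct (INFp x H Hu' s Hs) as [HG HB]. split; auto. apply HB; lra.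
- destruct (Rle_lt_or_eq_dec _ _ Hv) as [Hv'|Hv'].
  + destruct (EN x H Hv') as [Htm [HG [HB _]]]. specialize (H1 Hv').
    split; [|apply HB; lra]. apply G_intro. intros r Hr. apply (G_between x _ r HG).
    unfold Rmin, Rmax in *; destruct (Rle_dec 0 s); destruct (Rle_dec 0 (tm x)); lra.
  + symmetry in Hv'. destruct (INFm x H Hv' s ltac:(lra)) as [HG HB]. split; auto. apply HB; lra.
Qed.

Lemma seg_GBL x s : BL x -> Inn x s -> Gamma s x /\ BL (phi s x).
Proof.
intros H Hi. destruct (seg_full x s H Hi) as [HG HB].
destruct (G_between x s s HG) as [Gs _]. unfold Rmin, Rmax; destruct Rle_dec; lra.
split; auto. apply BL_of_B; auto.
Qed.

Lemma Inn_open x s : Inn x s -> exists eta, eta > 0 /\ forall h, Rabs h < eta -> Inn x (h + s).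
Proof.
intros [H1 H2].
set (e1 := if Rlt_dec 0 (v x) then s - tm x else 1).
set (e2 := if Rlt_dec 0 (u x) then tp x - s else 1).
assert (He1 : e1 > 0) by (unfold e1; destruct (Rlt_dec 0 (v x)) as [Hr|Hr]; [specialize (H1 Hr); lra|lra]).
assert (He2 : e2 > 0) by (unfold e2; destruct (Rlt_dec 0 (u x)) as [Hr|Hr]; [specialize (H2 Hr); lra|lra]).
exists (Rmin e1 e2). split. apply Rmin_pos; auto.
intros h Hh. assert (Hm1 := Rmin_l e1 e2). assert (Hm2 := Rmin_r e1 e2). apply Rabs_lt_between in Hh.
split; intros Hp.
- specialize (H1 Hp). unfold e1 in *. destruct (Rlt_dec 0 (v x)); [|lra]. lra.
- specialize (H2 Hp). unfold e2 in *. destruct (Rlt_dec 0 (u x)); [|lra]. lra.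
Qed.

Lemma Inn_conv x s1 s2 s : Inn x s1 -> Inn x s2 -> Rmin s1 s2 <= s <= Rmax s1 s2 -> Inn x s.
Proof.
intros [A1 A2] [B1 B2] Hs. unfold Rmin, Rmax in Hs. split; intros Hp.
- specialize (A1 Hp); specialize (B1 Hp). destruct Rle_dec in Hs; lra.
- specialize (A2 Hp); specialize (B2 Hp). destruct Rle_dec in Hs; lra.
Qed.

Lemma uniq_BL x : BL x -> g x = g' x.
Proof.
intros H. destruct (Req_dec (L1 x) delta) as [HL|HL].
{ apply Hbd. apply bd_intro; auto. }
assert (HLt : L1 x < delta) by (destruct H as [[_ Hl] _]; lra).
destruct (UV x H) as [Hu Hv].
set (al := a x). assert (Hal : al > 0) by (apply Ha_pos; auto).
assert (I0 : Inn x 0).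
{ split; intros Hp.
  - destruct (EN x H Hp) as [Htm [_ [_ HLe]]]. destruct (Rle_lt_or_eq_dec _ _ Htm); auto.
    exfalso. unfold en in HLe. rewrite e, (pf_id _ _ _ HF) in HLe. lra.
  - destruct (EX x H Hp) as [Htp [_ [_ HLe]]]. destruct (Rle_lt_or_eq_dec _ _ Htp); auto.
    exfalso. unfold ex in HLe. rewrite <- e, (pf_id _ _ _ HF) in HLe. lra. }
set (w := fun s => g (phi s x) - g' (phi s x)).
set (w1 := fun s => gd (phi s x) - gd' (phi s x)).
assert (Dw : forall s, Inn x s -> derivable_pt_lim w s (w1 s) /\ derivable_pt_lim w1 s (al ^ 2 * w s)).
{ intros s Hs. destruct (seg_GBL x s H Hs) as [Gs BLs]. destruct (seg_full x s H Hs) as [HGs HBs].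
  assert (Nb : exists eta, eta > 0 /\ forall h, Rabs h < eta -> Gamma (h + s) x /\ BL (phi (h + s) x)).
  { destruct (Inn_open x s Hs) as [eta [Heta Ho]]. exists eta. split; auto. intros h Hh.
    apply seg_GBL; auto. }
  assert (Ea : a (phi s x) = al) by (apply AC; auto).
  split.
  - apply (dl_minus (fun s => g (phi s x)) (fun s => g' (phi s x))); apply D1 with BL; auto.
  - apply (dl_eq _ _ (a (phi s x) ^ 2 * g (phi s x) - a (phi s x) ^ 2 * g' (phi s x))).
    unfold w. rewrite Ea. ring.
    apply (dl_minus (fun s => gd (phi s x)) (fun s => gd' (phi s x))); apply D1 with BL; auto. }
set (p := fun s => (w1 s + al * w s) * exp (- al * s)).
set (q := fun s => (w1 s - al * w s) * exp (al * s)).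
assert (Dp : forall s, Inn x s -> derivable_pt_lim p s 0).
{ intros s Hs. destruct (Dw s Hs) as [D1' D2']. unfold p.
  apply (dl_eq _ _ ((al ^ 2 * w s + al * w1 s) * exp (- al * s) + (w1 s + al * w s) * (- al * exp (- al * s)))). ring.
  apply (dl_mult (fun s => w1 s + al * w s) (fun s => exp (- al * s))).
  apply (dl_plus w1 (fun s => al * w s)); auto.
  apply (dl_eq _ _ (0 * w s + al * w1 s)). ring.
  apply (dl_mult (fun _ => al) w). apply dl_const. auto. apply dl_explin. }
assert (Dq' : forall s, Inn x s -> derivable_pt_lim q s 0).
{ intros s Hs. destruct (Dw s Hs) as [D1' D2']. unfold q.
  apply (dl_eq _ _ ((al ^ 2 * w s - al * w1 s) * exp (al * s) + (w1 s - al * w s) * (al * exp (al * s)))). ring.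
  apply (dl_mult (fun s => w1 s - al * w s) (fun s => exp (al * s))).
  apply (dl_minus w1 (fun s => al * w s)); auto.
  apply (dl_eq _ _ (0 * w s + al * w1 s)). ring.
  apply (dl_mult (fun _ => al) w). apply dl_const. auto. apply dl_explin. }
assert (Cst : forall h, (forall s, Inn x s -> derivable_pt_lim h s 0) -> forall s, Inn x s -> h s = h 0).
{ intros h Dh s Hs. destruct (Rtotal_order s 0) as [Hlt|[E|Hgt]].
  - destruct (MVT_cor2 h (fun _ => 0) s 0 Hlt) as [c [Hc _]].
    intros c Hc. apply Dh. apply (Inn_conv x s 0); auto. unfold Rmin, Rmax; destruct Rle_dec; lra. lra.
  - subst; auto.
  - destruct (MVT_cor2 h (fun _ => 0) 0 s Hgt) as [c [Hc _]].
    intros c Hc. apply Dh. apply (Inn_conv x 0 s); auto. unfold Rmin, Rmax; destruct Rle_dec; lra. lra. }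
set (A := p 0 / (2 * al)). set (Bc := - q 0 / (2 * al)).
assert (Wf : forall s, Inn x s -> w s = A * exp (al * s) + Bc * exp (- al * s)).
{ intros s Hs. pose proof (Cst p Dp s Hs) as E1. pose proof (Cst q Dq' s Hs) as E2.
  unfold p, q in E1, E2. unfold A, Bc.
  assert (Ex : exp (- al * s) * exp (al * s) = 1).
  { rewrite <- exp_plus. replace (- al * s + al * s) with 0 by ring. apply exp_0. }
  assert (w1 s + al * w s = p 0 * exp (al * s)).
  { unfold p. rewrite <- E1. rewrite Rmult_assoc, Ex. ring. }
  assert (w1 s - al * w s = q 0 * exp (- al * s)).
  { unfold q. rewrite <- E2. rewrite Rmult_assoc, (Rmult_comm (exp (al * s))), Ex. ring. }
  apply Rmult_eq_reg_l with (2 * al). 2: lra.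
  field_simplify. 2: lra. lra. }
set (mf := fun s => A * exp (al * s) + Bc * exp (- al * s)).
assert (Dmf : forall s, derivable_pt_lim mf s (A * (al * exp (al * s)) + Bc * (- al * exp (- al * s)))).
{ intros s. unfold mf.
  apply (dl_plus (fun s => A * exp (al * s)) (fun s => Bc * exp (- al * s))).
  - apply (dl_eq _ _ (0 * exp (al * s) + A * (al * exp (al * s)))). ring.
    apply (dl_mult (fun _ => A) (fun s => exp (al * s))). apply dl_const. apply dl_explin.
  - apply (dl_eq _ _ (0 * exp (- al * s) + Bc * (- al * exp (- al * s)))). ring.
    apply (dl_mult (fun _ => Bc) (fun s => exp (- al * s))). apply dl_const. apply dl_explin. }
destruct (bounded_B g Hgc) as [K1' HK1]. destruct (bounded_B g' Hgc') as [K2' HK2].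
assert (Hi : (u x > 0 -> mf (tp x) = 0) /\ (u x = 0 -> A = 0)).
{ split; intros Hu'.
  - destruct (EX x H Hu') as [Htp [HG [HB _]]].
    destruct (ex_bd x H Hu') as [Hb [BLe Gp]].
    assert (Htp' : 0 < tp x) by (apply (proj2 I0 Hu')).
    assert (W0 : w (tp x) = 0) by (unfold w; fold (ex x); rewrite Hbd; auto; ring).
    set (hh := fun s => w s - mf s).
    assert (hh (tp x) = 0).
    { apply endpt_hi with 0; auto.
      - intros s Hs. unfold hh. rewrite Wf. unfold mf; ring. split; intros Hp. pose proof (proj1 I0 Hp). lra. lra.
      - intros eps Heps.
        destruct (ocont g x (tp x) Hgc Gp (HB (tp x) ltac:(lra)) (eps/3)) as [e1 [He1 H1]]. lra.
        destruct (ocont g' x (tp x) Hgc' Gp (HB (tp x) ltac:(lra)) (eps/3)) as [e2 [He2 H2]]. lra.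
        destruct (deriv_cont mf (tp x) _ (Dmf (tp x)) (eps/3)) as [e3 [He3 H3]]. lra.
        exists (Rmin e1 (Rmin e2 e3)). split. repeat apply Rmin_pos; auto.
        intros s Hs Hd. assert (Hm1 := Rmin_l e1 (Rmin e2 e3)). assert (Hm2 := Rmin_r e1 (Rmin e2 e3)).
        assert (Hm3 := Rmin_l e2 e3). assert (Hm4 := Rmin_r e2 e3).
        assert (Gs : Gamma s x). { apply (G_between x (tp x) s HG). rewrite Rmin_left, Rmax_right; lra. }
        specialize (H1 s Gs (HB s Hs) ltac:(lra)). specialize (H2 s Gs (HB s Hs) ltac:(lra)).
        specialize (H3 s ltac:(lra)).
        unfold hh, w. 
        replace (g (phi s x) - g' (phi s x) - mf s - (g (phi (tp x) x) - g' (phi (tp x) x) - mf (tp x)))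
          with ((g (phi s x) - g (phi (tp x) x)) - (g' (phi s x) - g' (phi (tp x) x)) - (mf s - mf (tp x))) by ring.
        eapply Rle_lt_trans. apply Rabs_triang. eapply Rle_lt_trans. apply Rplus_le_compat_r. apply Rabs_triang.
        rewrite !Rabs_Ropp. lra. }
    unfold hh in H0. lra.
  - apply NNPP. intros HA.
    assert (HAp : Rabs A > 0) by (apply Rabs_pos_lt; auto).
    set (Z := (K1' + K2' + Rabs Bc) / Rabs A + 1).
    assert (HZ : Z >= 1). { unfold Z. assert (0 <= (K1' + K2' + Rabs Bc) / Rabs A). 
      { apply Rdiv_le_0_compat; auto. pose proof (HK1 x (proj1 H)). pose proof (HK2 x (proj1 H)).
        pose proof (Rabs_pos (g x)). pose proof (Rabs_pos (g' x)). pose proof (Rabs_pos Bc). lra. } lra. }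
    set (s := ln Z / al).
    assert (Hs0 : 0 <= s). { unfold s. apply Rdiv_le_0_compat; auto. rewrite <- ln_1. apply ln_le; lra. }
    assert (Is : Inn x s). { split; intros Hp. pose proof (proj1 I0 Hp). lra. lra. }
    assert (Es : exp (al * s) = Z). { unfold s. replace (al * (ln Z / al)) with (ln Z) by (field; lra). apply exp_ln; lra. }
    pose proof (Wf s Is) as Ws. destruct (seg_full x s H Is) as [_ Bs].
    pose proof (HK1 _ Bs). pose proof (HK2 _ Bs).
    assert (Rabs (w s) <= K1' + K2'). { unfold w. eapply Rle_trans. apply Rabs_triang. rewrite Rabs_Ropp. lra. }
    assert (exp (- al * s) <= 1). { rewrite <- exp_0. apply exp_le. nra. }
    pose proof (exp_pos (- al * s)).
    assert (Hq4 : Rabs (A * exp (al * s)) <= Rabs (w s) + Rabs (Bc * exp (- al * s))).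
    { rewrite Ws. replace (A * exp (al * s)) with ((A * exp (al * s) + Bc * exp (- al * s)) - Bc * exp (- al * s)) at 1 by ring.
      eapply Rle_trans. apply Rabs_triang. rewrite Rabs_Ropp. lra. }
    rewrite Rabs_mult, Es, (Rabs_right Z) in Hq4 by lra. rewrite Rabs_mult, (Rabs_right (exp (-al*s))) in Hq4 by lra.
    assert (Rabs Bc * exp (- al * s) <= Rabs Bc) by (pose proof (Rabs_pos Bc); nra).
    assert (Rabs A * Z = K1' + K2' + Rabs Bc + Rabs A) by (unfold Z; field; lra).
    lra. }
assert (Lo : (v x > 0 -> mf (tm x) = 0) /\ (v x = 0 -> Bc = 0)).
{ split; intros Hv'.
  - destruct (EN x H Hv') as [Htm [HG [HB _]]].
    destruct (en_bd x H Hv') as [Hb [BLe Gm]].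
    assert (Htm' : tm x < 0) by (apply (proj1 I0 Hv')).
    assert (W0 : w (tm x) = 0) by (unfold w; fold (en x); rewrite Hbd; auto; ring).
    set (hh := fun s => w s - mf s).
    assert (hh (tm x) = 0).
    { apply endpt_lo with 0; auto.
      - intros s Hs. unfold hh. rewrite Wf. unfold mf; ring. split; intros Hp. lra. pose proof (proj2 I0 Hp). lra.
      - intros eps Heps.
        destruct (ocont g x (tm x) Hgc Gm (HB (tm x) ltac:(lra)) (eps/3)) as [e1 [He1 H1]]. lra.
        destruct (ocont g' x (tm x) Hgc' Gm (HB (tm x) ltac:(lra)) (eps/3)) as [e2 [He2 H2]]. lra.
        destruct (deriv_cont mf (tm x) _ (Dmf (tm x)) (eps/3)) as [e3 [He3 H3]]. lra.
        exists (Rmin e1 (Rmin e2 e3)). split. repeat apply Rmin_pos; auto.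
        intros s Hs Hd. assert (Hm1 := Rmin_l e1 (Rmin e2 e3)). assert (Hm2 := Rmin_r e1 (Rmin e2 e3)).
        assert (Hm3 := Rmin_l e2 e3). assert (Hm4 := Rmin_r e2 e3).
        assert (Gs : Gamma s x). { apply (G_between x (tm x) s HG). rewrite Rmin_right, Rmax_left; lra. }
        specialize (H1 s Gs (HB s Hs) ltac:(lra)). specialize (H2 s Gs (HB s Hs) ltac:(lra)).
        specialize (H3 s ltac:(lra)).
        unfold hh, w.
        replace (g (phi s x) - g' (phi s x) - mf s - (g (phi (tm x) x) - g' (phi (tm x) x) - mf (tm x)))
          with ((g (phi s x) - g (phi (tm x) x)) - (g' (phi s x) - g' (phi (tm x) x)) - (mf s - mf (tm x))) by ring.
        eapply Rle_lt_trans. apply Rabs_triang. eapply Rle_lt_trans. apply Rplus_le_compat_r. apply Rabs_triang.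
        rewrite !Rabs_Ropp. lra. }
    unfold hh in H0. lra.
  - apply NNPP. intros HA.
    assert (HAp : Rabs Bc > 0) by (apply Rabs_pos_lt; auto).
    set (Z := (K1' + K2' + Rabs A) / Rabs Bc + 1).
    assert (HZ : Z >= 1). { unfold Z. assert (0 <= (K1' + K2' + Rabs A) / Rabs Bc). 
      { apply Rdiv_le_0_compat; auto. pose proof (HK1 x (proj1 H)). pose proof (HK2 x (proj1 H)).
        pose proof (Rabs_pos (g x)). pose proof (Rabs_pos (g' x)). pose proof (Rabs_pos A). lra. } lra. }
    set (s := - (ln Z / al)).
    assert (Hs0 : s <= 0). { unfold s. assert (0 <= ln Z / al). apply Rdiv_le_0_compat; auto. rewrite <- ln_1. apply ln_le; lra. lra. }
    assert (Is : Inn x s). { split; intros Hp. lra. pose proof (proj2 I0 Hp). lra. }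
    assert (Es : exp (- al * s) = Z). { unfold s. replace (- al * - (ln Z / al)) with (ln Z) by (field; lra). apply exp_ln; lra. }
    pose proof (Wf s Is) as Ws. destruct (seg_full x s H Is) as [_ Bs].
    pose proof (HK1 _ Bs). pose proof (HK2 _ Bs).
    assert (Rabs (w s) <= K1' + K2'). { unfold w. eapply Rle_trans. apply Rabs_triang. rewrite Rabs_Ropp. lra. }
    assert (exp (al * s) <= 1). { rewrite <- exp_0. apply exp_le. nra. }
    pose proof (exp_pos (al * s)).
    assert (Hq4 : Rabs (Bc * exp (- al * s)) <= Rabs (w s) + Rabs (A * exp (al * s))).
    { rewrite Ws. replace (Bc * exp (- al * s)) with ((A * exp (al * s) + Bc * exp (- al * s)) - A * exp (al * s)) at 1 by ring.
      eapply Rle_trans. apply Rabs_triang. rewrite Rabs_Ropp. lra. }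
    rewrite Rabs_mult, Es, (Rabs_right Z) in Hq4 by lra. rewrite Rabs_mult, (Rabs_right (exp (al*s))) in Hq4 by lra.
    assert (Rabs A * exp (al * s) <= Rabs A) by (pose proof (Rabs_pos A); nra).
    assert (Rabs Bc * Z = K1' + K2' + Rabs A + Rabs Bc) by (unfold Z; field; lra).
    lra. }
assert (AB : A = 0 /\ Bc = 0).
{ assert (Hpos : u x > 0 \/ v x > 0). { pose proof H as [[Nx _] Lx]. pose proof (HL1p x Nx Lx). rewrite L1_uv in H0. lra. }
  destruct (Rle_lt_or_eq_dec _ _ Hu) as [Hu'|Hu']; destruct (Rle_lt_or_eq_dec _ _ Hv) as [Hv'|Hv'].
  - pose proof (proj1 Hi Hu') as E1. pose proof (proj1 Lo Hv') as E2. unfold mf in E1, E2.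
    assert (Htp' : 0 < tp x) by (apply (proj2 I0 Hu')). assert (Htm' : tm x < 0) by (apply (proj1 I0 Hv')).
    set (X1 := exp (al * tp x)) in *. set (X2 := exp (al * tm x)) in *.
    assert (Y1 : exp (- al * tp x) = / X1) by (unfold X1; rewrite <- exp_Ropp; f_equal; ring).
    assert (Y2 : exp (- al * tm x) = / X2) by (unfold X2; rewrite <- exp_Ropp; f_equal; ring).
    rewrite Y1 in E1. rewrite Y2 in E2.
    assert (X1 > 1) by (unfold X1; rewrite <- exp_0; apply exp_increasing; nra).
    assert (0 < X2 < 1) by (unfold X2; split; [apply exp_pos|rewrite <- exp_0; apply exp_increasing; nra]).
    assert (F1 : A * X1 * X1 + Bc = 0) by (replace (A*X1*X1 + Bc) with (X1 * (A * X1 + Bc * / X1)) by (field; lra); rewrite E1; ring).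
    assert (F2 : A * X2 * X2 + Bc = 0) by (replace (A*X2*X2 + Bc) with (X2 * (A * X2 + Bc * / X2)) by (field; lra); rewrite E2; ring).
    assert (A * (X1 * X1 - X2 * X2) = 0) by lra.
    apply Rmult_integral in H2. destruct H2 as [H2|H2]. split; auto. rewrite H2 in F1. lra. exfalso. nra.
  - symmetry in Hv'. pose proof (proj2 Lo Hv') as E2. pose proof (proj1 Hi Hu') as E1. unfold mf in E1.
    rewrite E2 in E1. split; auto. pose proof (exp_pos (al * tp x)). nra.
  - symmetry in Hu'. pose proof (proj2 Hi Hu') as E2. pose proof (proj1 Lo Hv') as E1. unfold mf in E1.
    rewrite E2 in E1. split; auto. pose proof (exp_pos (- al * tm x)). nra.
  - lra. }
pose proof (Wf 0 I0) as W0. unfold w in W0. rewrite (pf_id _ _ _ HF) in W0.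
destruct AB as [A0 B0]. rewrite A0, B0 in W0. lra.
Qed.
End Uniq.

Definition ctn (S : X -> Prop) (g : X -> R) (x0 : X) :=
  forall eps, eps > 0 -> exists r, r > 0 /\ forall y, S y -> d y x0 < r -> Rabs (g y - g x0) < eps.
Definition rcont (h : R -> R) z0 :=
  forall eps, eps > 0 -> exists eta, eta > 0 /\ forall z, Rabs (z - z0) < eta -> Rabs (h z - h z0) < eps.
Definition rcont2 (op : R -> R -> R) p0 q0 :=
  forall eps, eps > 0 -> exists eta, eta > 0 /\ forall p q, Rabs (p - p0) < eta -> Rabs (q - q0) < eta ->
    Rabs (op p q - op p0 q0) < eps.

Lemma ctn_comp S g x0 h : ctn S g x0 -> rcont h (g x0) -> ctn S (fun y => h (g y)) x0.
Proof.
intros Hg Hh eps Heps. destruct (Hh eps Heps) as [eta [Heta H]]. destruct (Hg eta Heta) as [r [Hr H']].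
exists r. split; auto.
Qed.

Lemma ctn_comp2 S g1 g2 x0 op : ctn S g1 x0 -> ctn S g2 x0 -> rcont2 op (g1 x0) (g2 x0) ->
  ctn S (fun y => op (g1 y) (g2 y)) x0.
Proof.
intros H1 H2 Hop eps Heps. destruct (Hop eps Heps) as [eta [Heta H]].
destruct (H1 eta Heta) as [r1 [Hr1 K1']]. destruct (H2 eta Heta) as [r2 [Hr2 K2']].
exists (Rmin r1 r2). split. apply Rmin_pos; auto. intros y Sy Hy.
assert (Hm1 := Rmin_l r1 r2). assert (Hm2 := Rmin_r r1 r2). apply H; [apply K1'|apply K2']; auto; lra.
Qed.

Lemma ctn_const S c x0 : ctn S (fun _ => c) x0.
Proof. intros eps Heps. exists 1. split. lra. intros. rewrite Rminus_diag, Rabs_R0. auto. Qed.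

Lemma ctn_ext S g g' x0 : ctn S g x0 -> (exists r, r > 0 /\ forall y, S y -> d y x0 < r -> g y = g' y) ->
  g x0 = g' x0 -> ctn S g' x0.
Proof.
intros H [r [Hr He]] E0 eps Heps. destruct (H eps Heps) as [r' [Hr' H']].
exists (Rmin r r'). split. apply Rmin_pos; auto. intros y Sy Hy.
assert (Hm1 := Rmin_l r r'). assert (Hm2 := Rmin_r r r').
rewrite <- He, <- E0; auto; [|lra]. apply H'; auto. lra.
Qed.

Lemma ctn_sub (S S' : X -> Prop) g x0 : (forall y, S' y -> S y) -> ctn S g x0 -> ctn S' g x0.
Proof. intros Hs H eps Heps. destruct (H eps Heps) as [r [Hr H']]. exists r. split; auto. Qed.

Lemma rcont2_plus p0 q0 : rcont2 Rplus p0 q0.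
Proof.
intros eps Heps. exists (eps / 2). split. lra. intros p q Hp Hq.
replace (p + q - (p0 + q0)) with ((p - p0) + (q - q0)) by ring.
eapply Rle_lt_trans. apply Rabs_triang. lra.
Qed.

Lemma rcont2_minus p0 q0 : rcont2 Rminus p0 q0.
Proof.
intros eps Heps. exists (eps / 2). split. lra. intros p q Hp Hq.
replace (p - q - (p0 - q0)) with ((p - p0) - (q - q0)) by ring.
eapply Rle_lt_trans. apply Rabs_triang. rewrite Rabs_Ropp. lra.
Qed.

Lemma rcont2_mult p0 q0 : rcont2 Rmult p0 q0.
Proof.
intros eps Heps. set (K := Rabs p0 + Rabs q0 + 2).
assert (HK : K > 0) by (unfold K; pose proof (Rabs_pos p0); pose proof (Rabs_pos q0); lra).
exists (Rmin 1 (eps / K)). split. apply Rmin_pos; [lra|apply Rdiv_lt_0_compat; lra].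
intros p q Hp Hq. assert (Hm1 := Rmin_l 1 (eps / K)). assert (Hm2 := Rmin_r 1 (eps / K)).
replace (p * q - p0 * q0) with (p * (q - q0) + q0 * (p - p0)) by ring.
eapply Rle_lt_trans. apply Rabs_triang. rewrite !Rabs_mult.
assert (Rabs p <= Rabs p0 + 1). { replace p with (p0 + (p - p0)) by ring. eapply Rle_trans. apply Rabs_triang. lra. }
pose proof (Rabs_pos p). pose proof (Rabs_pos q0).
assert (Rabs p * Rabs (q - q0) <= (Rabs p0 + 1) * Rmin 1 (eps / K)).
{ apply Rmult_le_compat; try lra. apply Rabs_pos. }
assert (Rabs q0 * Rabs (p - p0) <= Rabs q0 * Rmin 1 (eps / K)).
{ apply Rmult_le_compat_l; lra. }
assert ((Rabs p0 + 1 + Rabs q0) * Rmin 1 (eps / K) < eps).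
{ assert ((Rabs p0 + 1 + Rabs q0) * Rmin 1 (eps / K) <= (Rabs p0 + 1 + Rabs q0) * (eps / K)).
  { apply Rmult_le_compat_l; lra. }
  assert ((Rabs p0 + 1 + Rabs q0) * (eps / K) < K * (eps / K)).
  { apply Rmult_lt_compat_r. apply Rdiv_lt_0_compat; lra. unfold K; lra. }
  assert (K * (eps / K) = eps) by (field; lra). lra. }
lra.
Qed.

Lemma ctn_plus S g1 g2 x0 : ctn S g1 x0 -> ctn S g2 x0 -> ctn S (fun y => g1 y + g2 y) x0.
Proof. intros; apply (ctn_comp2 S g1 g2 x0 Rplus); auto. apply rcont2_plus. Qed.
Lemma ctn_minus S g1 g2 x0 : ctn S g1 x0 -> ctn S g2 x0 -> ctn S (fun y => g1 y - g2 y) x0.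
Proof. intros; apply (ctn_comp2 S g1 g2 x0 Rminus); auto. apply rcont2_minus. Qed.
Lemma ctn_mult S g1 g2 x0 : ctn S g1 x0 -> ctn S g2 x0 -> ctn S (fun y => g1 y * g2 y) x0.
Proof. intros; apply (ctn_comp2 S g1 g2 x0 Rmult); auto. apply rcont2_mult. Qed.

Lemma rcont_of_deriv h z0 l : derivable_pt_lim h z0 l -> rcont h z0.
Proof. intros H eps Heps. destruct (deriv_cont h z0 l H eps Heps) as [e [He H']]. exists e; auto. Qed.

Lemma rcont_inv z0 : z0 <> 0 -> rcont Rinv z0.
Proof. intros H. apply rcont_of_deriv with (- / z0 ^ 2). apply is_derive_Reals.
  apply (is_derive_ext (fun z => / z)). auto.
  auto_derive. auto. field. auto. Qed.

Lemma rcont_exp z0 : rcont exp z0.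
Proof. apply rcont_of_deriv with (exp z0). apply derivable_pt_lim_exp. Qed.

Lemma rcont_ln z0 : z0 > 0 -> rcont ln z0.
Proof. intros H. apply rcont_of_deriv with (/ z0). apply derivable_pt_lim_ln. auto. Qed.

Lemma rcont_sqrt z0 : 0 <= z0 -> rcont sqrt z0.
Proof.
intros H eps Heps. destruct (continuity_pt_sqrt z0 H eps Heps) as [e [He H']].
exists e. split; auto. intros z Hz. destruct (Req_dec z z0) as [E|E].
subst. rewrite Rminus_diag, Rabs_R0. auto.
apply (H' z). split. split. exact I. auto. exact Hz.
Qed.

Lemma ctn_div S g1 g2 x0 : ctn S g1 x0 -> ctn S g2 x0 -> g2 x0 <> 0 -> ctn S (fun y => g1 y / g2 y) x0.
Proof.
intros H1 H2 Hn. unfold Rdiv. apply ctn_mult; auto.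
apply (ctn_comp S g2 x0 Rinv); auto. apply rcont_inv; auto.
Qed.

Lemma Lphi_ctn S t x0 : Gamma t x0 -> N (phi t x0) ->
  (exists r, r > 0 /\ forall y, d y x0 < r -> Gamma t y /\ N (phi t y)) ->
  ctn S (fun y => L1 (phi t y)) x0.
Proof.
intros Gt Nt [r [Hr Hn]] eps Heps.
destruct (HL1c _ Nt eps Heps) as [rho [Hrho H]].
destruct (pf_cont _ _ _ HF t x0 Gt rho Hrho) as [e [He Hc]].
exists (Rmin r e). split. apply Rmin_pos; auto. intros y Sy Hy.
assert (Hm1 := Rmin_l r e). assert (Hm2 := Rmin_r r e).
destruct (Hn y) as [Gy Ny]. lra. apply H; auto. apply Hc; auto. rewrite Rminus_diag, Rabs_R0; auto. lra.
Qed.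

Lemma Ld_ctn S x0 : m_interior M N x0 -> ctn S Ld x0.
Proof.
intros Ix. destruct (window x0 1 Ix ltac:(lra)) as [e [He Hw]].
set (s := e / 2).
assert (Hwin : forall y, d y x0 < e -> G y s /\ G y (- s)).
{ intros y Hy. split; apply G_intro; intros r Hr; destruct (Hw y r) as [G1 [I1 _]]; auto;
  unfold s, Rmin, Rmax in Hr; destruct Rle_dec in Hr; apply Rabs_lt_between; lra. }
assert (Hs : 0 < s) by (unfold s; lra).
assert (Hden : exp s - exp (- s) > 0) by (assert (exp (-s) < exp s) by (apply exp_increasing; lra); lra).
assert (Hf : forall y, d y x0 < e -> Ld y = (L1 (phi s y) - L1 (phi (- s) y)) / (exp s - exp (- s))).
{ intros y Hy. destruct (Hwin y Hy) as [G1 G2]. destruct (OF y s G1) as [E1 _]. destruct (OF y (- s) G2) as [E2 _].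
  rewrite E1, E2, Ropp_involutive. unfold u, v. field. lra. }
assert (Hn : forall t, Rabs t < e -> exists r, r > 0 /\ forall y, d y x0 < r -> Gamma t y /\ N (phi t y)).
{ intros t Ht. exists e. split; auto. intros y Hy. destruct (Hw y t) as [G1 [I1 _]]; auto. split; auto. apply int_N; auto. }
apply ctn_ext with (fun y => (L1 (phi s y) - L1 (phi (- s) y)) / (exp s - exp (- s))).
- apply ctn_div. apply ctn_minus.
  + destruct (Hw x0 s) as [G1 [I1 _]]. rewrite d_self; auto. unfold s; rewrite Rabs_right; lra.
    apply Lphi_ctn; auto. apply int_N; auto. apply Hn. unfold s; rewrite Rabs_right; lra.
  + destruct (Hw x0 (- s)) as [G1 [I1 _]]. rewrite d_self; auto. unfold s; rewrite Rabs_Ropp, Rabs_right; lra.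
    apply Lphi_ctn; auto. apply int_N; auto. apply Hn. unfold s; rewrite Rabs_Ropp, Rabs_right; lra.
  + apply ctn_const.
  + lra.
- exists e. split; auto. intros y _ Hy. symmetry. apply Hf; auto.
- symmetry. apply Hf. rewrite d_self; auto.
Qed.

Lemma L1_ctn x0 : B x0 -> ctn B L1 x0.
Proof.
intros [Nx _] eps Heps. destruct (HL1c x0 Nx eps Heps) as [r [Hr H]]. exists r. split; auto.
intros y [Ny _] Hy. apply H; auto.
Qed.

Lemma BL_near x0 : BL x0 -> exists r, r > 0 /\ forall y, B y -> d y x0 < r -> BL y.
Proof.
intros H. pose proof H as [[Nx Lx] Lm]. pose proof (HL1p x0 Nx Lm).
destruct (HL1c x0 Nx (L1 x0 / 2)) as [r [Hr Hc]]. lra.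
exists r. split; auto. intros y By Hy. split; auto. intros HL.
specialize (Hc y (proj1 By) Hy). rewrite HL10 in Hc; auto. rewrite Rminus_0_l, Rabs_Ropp, Rabs_right in Hc; lra.
Qed.

Lemma ctn_BL_B g x0 : BL x0 -> ctn BL g x0 -> ctn B g x0.
Proof.
intros H Hc eps Heps. destruct (BL_near x0 H) as [r [Hr Hn]]. destruct (Hc eps Heps) as [r' [Hr' H']].
exists (Rmin r r'). split. apply Rmin_pos; auto. intros y By Hy.
assert (Hm1 := Rmin_l r r'). assert (Hm2 := Rmin_r r r'). apply H'. apply Hn; auto; lra. lra.
Qed.

Lemma uv_ctn x0 : BL x0 -> ctn BL u x0 /\ ctn BL v x0.
Proof.
intros H. pose proof H as [[Nx Lx] _].
assert (C1 : ctn BL L1 x0). { apply ctn_sub with B. intros y [By _]; auto. apply L1_ctn. apply H. }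
assert (C2 : ctn BL Ld x0). { apply Ld_ctn. apply HBint; auto. }
split; unfold u, v; apply ctn_div; auto using ctn_plus, ctn_minus, ctn_const; lra.
Qed.

Lemma Dq_ctn x0 : BL x0 -> ctn BL Dq x0.
Proof.
intros H. destruct (uv_ctn x0 H) as [Cu Cv].
unfold Dq. apply (ctn_comp BL (fun y => delta ^ 2 - 4 * u y * v y) x0 sqrt).
- apply ctn_minus. apply ctn_const. apply ctn_mult; auto. apply ctn_mult; auto. apply ctn_const.
- apply rcont_sqrt. apply disc; auto.
Qed.

Lemma E_ctn x0 : BL x0 -> ctn BL Ep x0 /\ ctn BL Em x0.
Proof.
intros H. destruct (uv_ctn x0 H) as [Cu Cv]. pose proof (Dq_ctn x0 H). pose proof (dpos x0 H).
unfold Ep, Em. split; apply ctn_div; auto using ctn_plus, ctn_mult, ctn_const; lra.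
Qed.

Lemma pw_small eps : eps > 0 -> exists t, t > 0 /\ forall E al, 0 <= E < t -> E <= 1 -> m <= al -> pw E al < eps.
Proof.
intros He. exists (exp (ln eps / m)). split. apply exp_pos.
intros E al [E0 E1] E2 Hal. destruct (Rle_lt_or_eq_dec _ _ E0) as [Ep'|Ep'].
2: { subst. rewrite pw_zero. auto. }
assert (pw E al <= exp (m * ln E)) by (apply pw_le_m; lra).
assert (exp (m * ln E) < eps).
{ replace eps with (exp (m * (ln eps / m))) by (replace (m * (ln eps / m)) with (ln eps) by (field; lra); apply exp_ln; auto).
  apply exp_increasing. apply Rmult_lt_compat_l; auto.
  rewrite <- (ln_exp (ln eps / m)). apply ln_increasing; auto. }
lra.
Qed.

Lemma pw_ctn (E al : X -> R) x0 : ctn BL E x0 -> ctn BL al x0 -> (forall y, BL y -> 0 <= E y <= 1 /\ m <= al y) ->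
  BL x0 -> ctn BL (fun y => pw (E y) (al y)) x0.
Proof.
intros CE Ca Hr H0. destruct (Hr x0 H0) as [[E0 E1] Ha0].
destruct (Rle_lt_or_eq_dec _ _ E0) as [Ep'|Ep'].
- destruct (CE (E x0 / 2)) as [r [Hrr HE]]. lra.
  apply ctn_ext with (fun y => exp (al y * ln (E y))).
  + apply (ctn_comp BL (fun y => al y * ln (E y)) x0 exp). apply ctn_mult; auto.
    apply (ctn_comp BL E x0 ln); auto. apply rcont_ln; auto. apply rcont_exp.
  + exists r. split; auto. intros y BLy Hy. specialize (HE y BLy Hy). apply Rabs_lt_between in HE.
    unfold pw. destruct Rlt_dec; auto. lra.
  + unfold pw. destruct Rlt_dec; auto. lra.
- intros eps Heps. destruct (pw_small eps Heps) as [t [Ht Hs]].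
  destruct (CE t Ht) as [r [Hrr HE]]. exists r. split; auto. intros y BLy Hy.
  specialize (HE y BLy Hy). rewrite <- Ep'. rewrite pw_zero, Rminus_0_r. rewrite <- Ep', Rminus_0_r in HE.
  destruct (Hr y BLy) as [[F0 F1] Fa]. rewrite Rabs_right in HE by lra.
  assert (0 <= pw (E y) (al y)) by (unfold pw; destruct Rlt_dec; [left; apply exp_pos|lra]).
  rewrite Rabs_right by lra. apply Hs; auto.
Qed.

Lemma P_ctn x0 : BL x0 -> ctn BL Pp x0 /\ ctn BL Pm x0.
Proof.
intros H. destruct (E_ctn x0 H) as [C1 C2].
assert (Ca : ctn BL a x0). { intros eps Heps. destruct (Ha_cont x0 H eps Heps) as [r [Hr H']]. exists r. auto. }
split; unfold Pp, Pm; apply (pw_ctn _ a x0); auto; intros y Hy; split; auto; apply Ep_Em_bounds; auto.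
Qed.

Lemma en_ctn x0 : BL x0 -> v x0 > 0 -> forall eps, eps > 0 -> exists r, r > 0 /\ forall y, BL y -> d y x0 < r ->
  m_boundary M B (en y) /\ d (en y) (en x0) < eps.
Proof.
intros H Hv eps Heps. destruct (uv_ctn x0 H) as [_ Cv]. destruct (E_ctn x0 H) as [_ CE].
destruct (Em_pos x0 H) as [Em0 _]. specialize (Em0 Hv).
assert (Ct : ctn BL tm x0). { unfold tm. apply (ctn_comp BL Em x0 ln); auto. apply rcont_ln; auto. }
destruct (en_bd x0 H Hv) as [_ [_ G0]].
destruct (pf_cont _ _ _ HF _ _ G0 eps Heps) as [e [He Hc]].
destruct (Ct e He) as [r1 [Hr1 H1]]. destruct (Cv (v x0 / 2)) as [r2 [Hr2 H2]]. lra.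
exists (Rmin (Rmin r1 r2) e). split. repeat apply Rmin_pos; auto.
intros y BLy Hy. assert (Hm1 := Rmin_l (Rmin r1 r2) e). assert (Hm2 := Rmin_r (Rmin r1 r2) e).
assert (Hm3 := Rmin_l r1 r2). assert (Hm4 := Rmin_r r1 r2).
specialize (H2 y BLy ltac:(lra)). apply Rabs_lt_between in H2.
destruct (en_bd y BLy ltac:(lra)) as [Hb [_ Gy]]. split; auto.
apply Hc; auto. apply H1; auto; lra. lra.
Qed.

Lemma ex_ctn x0 : BL x0 -> u x0 > 0 -> forall eps, eps > 0 -> exists r, r > 0 /\ forall y, BL y -> d y x0 < r ->
  m_boundary M B (ex y) /\ d (ex y) (ex x0) < eps.
Proof.
intros H Hu eps Heps. destruct (uv_ctn x0 H) as [Cu _]. destruct (E_ctn x0 H) as [CE _].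
destruct (Ep_pos x0 H) as [Ep0 _]. specialize (Ep0 Hu).
assert (Ct : ctn BL tp x0). { unfold tp. apply (ctn_comp BL (fun y => ln (Ep y)) x0 Ropp).
  apply (ctn_comp BL Ep x0 ln); auto. apply rcont_ln; auto.
  intros e He. exists e. split; auto. intros z Hz. replace (- z - - ln (Ep x0)) with (- (z - ln (Ep x0))) by ring.
  rewrite Rabs_Ropp; auto. }
destruct (ex_bd x0 H Hu) as [_ [_ G0]].
destruct (pf_cont _ _ _ HF _ _ G0 eps Heps) as [e [He Hc]].
destruct (Ct e He) as [r1 [Hr1 H1]]. destruct (Cu (u x0 / 2)) as [r2 [Hr2 H2]]. lra.
exists (Rmin (Rmin r1 r2) e). split. repeat apply Rmin_pos; auto.
intros y BLy Hy. assert (Hm1 := Rmin_l (Rmin r1 r2) e). assert (Hm2 := Rmin_r (Rmin r1 r2) e).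
assert (Hm3 := Rmin_l r1 r2). assert (Hm4 := Rmin_r r1 r2).
specialize (H2 y BLy ltac:(lra)). apply Rabs_lt_between in H2.
destruct (ex_bd y BLy ltac:(lra)) as [Hb [_ Gy]]. split; auto.
apply Hc; auto. apply H1; auto; lra. lra.
Qed.

Lemma fen_ctn x0 : BL x0 -> v x0 > 0 -> ctn BL (fun y => f (en y)) x0.
Proof.
intros H Hv eps Heps. destruct (en_bd x0 H Hv) as [Hb _].
destruct (Hfc _ Hb eps Heps) as [rho [Hrho Hc]].
destruct (en_ctn x0 H Hv rho Hrho) as [r [Hr Hn]]. exists r. split; auto.
intros y BLy Hy. destruct (Hn y BLy Hy). apply Hc; auto.
Qed.

Lemma fex_ctn x0 : BL x0 -> u x0 > 0 -> ctn BL (fun y => f (ex y)) x0.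
Proof.
intros H Hu eps Heps. destruct (ex_bd x0 H Hu) as [Hb _].
destruct (Hfc _ Hb eps Heps) as [rho [Hrho Hc]].
destruct (ex_ctn x0 H Hu rho Hrho) as [r [Hr Hn]]. exists r. split; auto.
intros y BLy Hy. destruct (Hn y BLy Hy). apply Hc; auto.
Qed.

Lemma c_all y : BL y -> 0 <= c1 y <= 1 /\ 0 <= c2 y <= 1 /\
  c1 y + c2 y = (Pp y + Pm y) / (1 + Pp y * Pm y) /\ c1 y <= Pm y /\ c2 y <= Pp y.
Proof.
intros H. destruct (P_range y H) as [[A1 A2] [B1 B2]].
destruct (Req_EM_T (den y) 0) as [Hd|Hd].
- destruct (den_props y H) as [_ Hd']. destruct (Hd' Hd) as [E1 E2].
  unfold c1, c2. destruct Req_EM_T; [|contradiction]. rewrite E1, E2. repeat split; try lra; try field; try (apply Rlt_le; apply Rinv_0_lt_compat; lra); try (rewrite <- Rinv_1; apply Rinv_le_contravar; lra).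
- destruct (c_props y H Hd) as [C1 [C2 C3]]. repeat split; try lra.
  + unfold c1. destruct Req_EM_T; [contradiction|]. destruct (den_props y H) as [D0 _].
    assert (Dp : den y > 0) by lra. unfold den in *.
    apply Rmult_le_reg_r with (1 - Pp y ^ 2 * Pm y ^ 2); auto. unfold Rdiv. rewrite Rmult_assoc, Rinv_l by lra.
    rewrite Rmult_1_r. apply Rmult_le_compat_l; auto.
    assert (0 <= Pp y ^ 2) by (apply pow_le; auto). assert (Pm y ^ 2 <= 1) by (simpl; nra).
    assert (Pp y ^ 2 * Pm y ^ 2 <= Pp y ^ 2 * 1) by (apply Rmult_le_compat_l; auto). lra.
  + unfold c2. destruct Req_EM_T; [contradiction|]. destruct (den_props y H) as [D0 _].
    assert (Dp : den y > 0) by lra. unfold den in *.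
    apply Rmult_le_reg_r with (1 - Pp y ^ 2 * Pm y ^ 2); auto. unfold Rdiv. rewrite Rmult_assoc, Rinv_l by lra.
    rewrite Rmult_1_r. apply Rmult_le_compat_l; auto.
    assert (0 <= Pm y ^ 2) by (apply pow_le; auto). assert (Pp y ^ 2 <= 1) by (simpl; nra).
    assert (Pp y ^ 2 * Pm y ^ 2 <= 1 * Pm y ^ 2) by (apply Rmult_le_compat_r; auto). lra.
Qed.

Lemma L2_notBL y : ~ BL y -> L2 y = 0.
Proof. intros H. unfold L2. destruct excluded_middle_informative; tauto. Qed.

Lemma Mf_ex : exists Mf, Mf >= 0 /\ forall z, m_boundary M B z -> Rabs (f z) <= Mf.
Proof.
destruct (bounded_f_gen f Hfc) as [K HK]. exists (Rmax K 0). split. pose proof (Rmax_r K 0); lra.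
intros z Hz. eapply Rle_trans. apply HK; auto. apply Rmax_l.
Qed.

Lemma T_bounds Mf y : (forall z, m_boundary M B z -> Rabs (f z) <= Mf) -> Mf >= 0 -> BL y ->
  Rabs (c1 y * f (en y)) <= Mf * Pm y /\ Rabs (c2 y * f (ex y)) <= Mf * Pp y.
Proof.
intros HM HM0 H. destruct (c_all y H) as [C1 [C2 [_ [L1' L2']]]]. destruct (UV y H) as [Hu Hv].
split.
- rewrite Rabs_mult, Rabs_right by lra.
  destruct (Rle_lt_or_eq_dec _ _ Hv) as [Hv'|Hv'].
  + pose proof (HM _ (proj1 (en_bd y H Hv'))). pose proof (Rabs_pos (f (en y))).
    assert (c1 y * Rabs (f (en y)) <= Pm y * Rabs (f (en y))) by (apply Rmult_le_compat_r; lra).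
    assert (Pm y * Rabs (f (en y)) <= Pm y * Mf) by (apply Rmult_le_compat_l; lra). lra.
  + symmetry in Hv'. assert (Pm y = 0) by (unfold Pm; rewrite (proj2 (Em_pos y H) Hv'); apply pw_zero).
    assert (c1 y = 0) by lra. rewrite H1, H0. lra.
- rewrite Rabs_mult, Rabs_right by lra.
  destruct (Rle_lt_or_eq_dec _ _ Hu) as [Hu'|Hu'].
  + pose proof (HM _ (proj1 (ex_bd y H Hu'))). pose proof (Rabs_pos (f (ex y))).
    assert (c2 y * Rabs (f (ex y)) <= Pp y * Rabs (f (ex y))) by (apply Rmult_le_compat_r; lra).
    assert (Pp y * Rabs (f (ex y)) <= Pp y * Mf) by (apply Rmult_le_compat_l; lra). lra.
  + symmetry in Hu'. assert (Pp y = 0) by (unfold Pp; rewrite (proj2 (Ep_pos y H) Hu'); apply pw_zero).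
    assert (c2 y = 0) by lra. rewrite H1, H0. lra.
Qed.

Lemma L2_ctn_Lam x0 : Lam x0 -> ctn B L2 x0.
Proof.
intros HL. destruct Mf_ex as [Mf [HM0 HM]].
pose proof (HLamint x0 HL) as Ix. pose proof (int_N x0 Ix) as Nx.
intros eps Heps. rewrite (L2_Lam x0 HL).
destruct (pw_small (eps / (2 * (Mf + 1)))) as [t [Ht Hs]]. apply Rdiv_lt_0_compat; lra.
destruct (HL1c x0 Nx (Rmin (t * delta / 2) delta)) as [r [Hr Hc]]. apply Rmin_pos; nra.
exists r. split; auto. intros y By Hy. rewrite Rminus_0_r.
destruct (classic (BL y)) as [BLy|BLy]; [|rewrite L2_notBL; auto; rewrite Rabs_R0; auto].
specialize (Hc y (proj1 By) Hy). rewrite (HL10 x0 HL) in Hc. rewrite Rminus_0_r in Hc.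
assert (Hm1 := Rmin_l (t * delta / 2) delta).
pose proof (HL1p y (proj1 By) (proj2 BLy)). rewrite Rabs_right in Hc by lra.
destruct (UV y BLy) as [Hu Hv]. pose proof (dpos y BLy). destruct (Dq_props y BLy) as [HD _].
rewrite L1_uv in Hc.
destruct (Ep_Em_bounds y BLy) as [[E1 E2] [F1 F2]].
assert (Ep y < t).
{ unfold Ep. apply Rle_lt_trans with (2 * u y / delta).
  unfold Rdiv. apply Rmult_le_compat_l. lra. apply Rinv_le_contravar; lra.
  apply Rmult_lt_reg_r with delta; auto. unfold Rdiv. rewrite Rmult_assoc, Rinv_l by lra. lra. }
assert (Em y < t).
{ unfold Em. apply Rle_lt_trans with (2 * v y / delta).
  unfold Rdiv. apply Rmult_le_compat_l. lra. apply Rinv_le_contravar; lra.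
  apply Rmult_lt_reg_r with delta; auto. unfold Rdiv. rewrite Rmult_assoc, Rinv_l by lra. lra. }
pose proof (Hma y BLy).
assert (Pp y < eps / (2 * (Mf + 1))) by (apply Hs; auto; lra).
assert (Pm y < eps / (2 * (Mf + 1))) by (apply Hs; auto; lra).
destruct (T_bounds Mf y HM HM0 BLy) as [T1 T2].
rewrite L2_BL by auto.
assert (Mf * (Pp y + Pm y) < eps).
{ set (e' := eps / (2 * (Mf + 1))) in *.
  assert (Mf * (Pp y + Pm y) <= Mf * (2 * e')) by (apply Rmult_le_compat_l; lra).
  assert (Mf * (2 * e') = eps - eps / (Mf + 1)) by (unfold e'; field; lra).
  assert (eps / (Mf + 1) > 0) by (apply Rdiv_lt_0_compat; lra). lra. }
eapply Rle_lt_trans. apply Rabs_triang. lra.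
Qed.

Lemma ctn_dom S (T c : X -> R) K x0 : ctn S c x0 -> c x0 = 0 -> T x0 = 0 -> K >= 0 ->
  (forall y, S y -> Rabs (T y) <= K * Rabs (c y)) -> ctn S T x0.
Proof.
intros Hc Hc0 HT0 HK Hb eps Heps. destruct (Hc (eps / (K + 1))) as [r [Hr H]]. apply Rdiv_lt_0_compat; lra.
exists r. split; auto. intros y Sy Hy. specialize (H y Sy Hy). rewrite Hc0, Rminus_0_r in H.
rewrite HT0, Rminus_0_r. eapply Rle_lt_trans. apply Hb; auto.
assert (K * Rabs (c y) <= (K + 1) * Rabs (c y)) by (pose proof (Rabs_pos (c y)); nra).
assert ((K + 1) * Rabs (c y) < (K + 1) * (eps / (K + 1))) by (apply Rmult_lt_compat_l; lra).
assert ((K + 1) * (eps / (K + 1)) = eps) by (field; lra). lra.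
Qed.

Lemma rcont_sq z0 : rcont (fun z => z ^ 2) z0.
Proof. apply rcont_of_deriv with (2 * z0). apply is_derive_Reals. auto_derive; auto. ring. Qed.

Lemma L2_ctn_BL x0 : BL x0 -> ctn BL L2 x0.
Proof.
intros H. destruct Mf_ex as [Mf [HM0 HM]].
destruct (P_ctn x0 H) as [CPp CPm].
destruct (UV x0 H) as [Hu Hv].
destruct (Req_EM_T (den x0) 0) as [Hd|Hd].
-
  destruct (tang x0 H Hd) as [E1 E2].
  assert (Hu' : u x0 > 0). { destruct (Rle_lt_or_eq_dec _ _ Hu); auto. symmetry in e. rewrite (proj2 (Ep_pos x0 H) e) in E1. lra. }
  assert (Hv' : v x0 > 0). { destruct (Rle_lt_or_eq_dec _ _ Hv); auto. symmetry in e. rewrite (proj2 (Em_pos x0 H) e) in E2. lra. }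
  assert (Pp1 : Pp x0 = 1) by (unfold Pp; rewrite E1; apply pw_1).
  assert (Pm1 : Pm x0 = 1) by (unfold Pm; rewrite E2; apply pw_1).
  assert (Hen : en x0 = x0) by (apply en_tang; auto). assert (Hex : ex x0 = x0) by (apply ex_tang; auto).
  assert (L0 : L2 x0 = f x0).
  { rewrite L2_BL, Hen, Hex by auto. unfold c1, c2. destruct Req_EM_T; [|contradiction]. field. }
  assert (CS : ctn BL (fun y => (Pp y + Pm y) / (1 + Pp y * Pm y)) x0).
  { apply ctn_div. apply ctn_plus; auto. apply ctn_plus. apply ctn_const. apply ctn_mult; auto. rewrite Pp1, Pm1. lra. }
  pose proof (fen_ctn x0 H Hv') as Fen. pose proof (fex_ctn x0 H Hu') as Fex.
  unfold ctn in Fen, Fex. rewrite Hen in Fen. rewrite Hex in Fex.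
  intros eps Heps.
  destruct (Fen (eps / 3)) as [r1 [Hr1 H1]]. lra.
  destruct (Fex (eps / 3)) as [r2 [Hr2 H2]]. lra.
  destruct (CS (eps / (3 * (Rabs (f x0) + 1)))) as [r3 [Hr3 H3]].
  { apply Rdiv_lt_0_compat. lra. pose proof (Rabs_pos (f x0)). lra. }
  exists (Rmin r1 (Rmin r2 r3)). split. repeat apply Rmin_pos; auto.
  intros y BLy Hy. assert (Hm1 := Rmin_l r1 (Rmin r2 r3)). assert (Hm2 := Rmin_r r1 (Rmin r2 r3)).
  assert (Hm3 := Rmin_l r2 r3). assert (Hm4 := Rmin_r r2 r3).
  specialize (H1 y BLy ltac:(lra)). specialize (H2 y BLy ltac:(lra)). specialize (H3 y BLy ltac:(lra)).
  cbv beta in H1, H2, H3. rewrite Pp1, Pm1 in H3.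
  replace ((1 + 1) / (1 + 1 * 1)) with 1 in H3 by field.
  destruct (c_all y BLy) as [C1 [C2 [C3 _]]].
  rewrite L0, L2_BL by auto. rewrite <- C3 in H3.
  replace (c1 y * f (en y) + c2 y * f (ex y) - f x0) with
    (c1 y * (f (en y) - f x0) + c2 y * (f (ex y) - f x0) + (c1 y + c2 y - 1) * f x0) by ring.
  eapply Rle_lt_trans. apply Rabs_triang. eapply Rle_lt_trans. apply Rplus_le_compat_r. apply Rabs_triang.
  rewrite !Rabs_mult. rewrite (Rabs_right (c1 y)), (Rabs_right (c2 y)) by lra.
  assert (c1 y * Rabs (f (en y) - f x0) <= 1 * (eps / 3)) by (apply Rmult_le_compat; try lra; apply Rabs_pos).
  assert (c2 y * Rabs (f (ex y) - f x0) <= 1 * (eps / 3)) by (apply Rmult_le_compat; try lra; apply Rabs_pos).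
  pose proof (Rabs_pos (f x0)).
  assert (Rabs (c1 y + c2 y - 1) * Rabs (f x0) <= (eps / (3 * (Rabs (f x0) + 1))) * Rabs (f x0)).
  { apply Rmult_le_compat_r; lra. }
  assert (eps / (3 * (Rabs (f x0) + 1)) > 0) by (apply Rdiv_lt_0_compat; lra).
  assert (eps / (3 * (Rabs (f x0) + 1)) * (Rabs (f x0) + 1) = eps / 3) by (field; lra).
  lra.
-
  assert (Cden : ctn BL den x0).
  { unfold den. apply ctn_minus. apply ctn_const. apply ctn_mult; apply (ctn_comp BL _ x0 (fun z => z ^ 2)); auto;
    apply rcont_sq. }
  destruct (Cden (Rabs (den x0))) as [rd [Hrd Hdn]]. apply Rabs_pos_lt; auto.
  assert (Near : forall y, BL y -> d y x0 < rd -> den y <> 0).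
  { intros y BLy Hy Hz. specialize (Hdn y BLy Hy). rewrite Hz, Rminus_0_l, Rabs_Ropp in Hdn. lra. }
  assert (Cc1 : ctn BL c1 x0).
  { apply ctn_ext with (fun y => Pm y * (1 - Pp y ^ 2) / den y).
    - apply ctn_div; auto. apply ctn_mult; auto. apply ctn_minus. apply ctn_const.
      apply (ctn_comp BL _ x0 (fun z => z ^ 2)); auto. apply rcont_sq.
    - exists rd. split; auto. intros y BLy Hy. unfold c1. destruct Req_EM_T; auto. exfalso; eapply Near; eauto.
    - unfold c1. destruct Req_EM_T; auto. contradiction. }
  assert (Cc2 : ctn BL c2 x0).
  { apply ctn_ext with (fun y => Pp y * (1 - Pm y ^ 2) / den y).
    - apply ctn_div; auto. apply ctn_mult; auto. apply ctn_minus. apply ctn_const.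
      apply (ctn_comp BL _ x0 (fun z => z ^ 2)); auto. apply rcont_sq.
    - exists rd. split; auto. intros y BLy Hy. unfold c2. destruct Req_EM_T; auto. exfalso; eapply Near; eauto.
    - unfold c2. destruct Req_EM_T; auto. contradiction. }
  assert (CT1 : ctn BL (fun y => c1 y * f (en y)) x0).
  { destruct (Rle_lt_or_eq_dec _ _ Hv) as [Hv'|Hv'].
    - apply ctn_mult; auto. apply fen_ctn; auto.
    - symmetry in Hv'. assert (P0 : Pm x0 = 0) by (unfold Pm; rewrite (proj2 (Em_pos x0 H) Hv'); apply pw_zero).
      assert (c0 : c1 x0 = 0) by (destruct (c_all x0 H) as [C1 [_ [_ [C4 _]]]]; lra).
      apply ctn_dom with Pm Mf; auto. rewrite c0; ring.
      intros y BLy. destruct (T_bounds Mf y HM HM0 BLy) as [T1 _].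
      destruct (P_range y BLy) as [_ [B1 _]]. rewrite (Rabs_right (Pm y)); lra. }
  assert (CT2 : ctn BL (fun y => c2 y * f (ex y)) x0).
  { destruct (Rle_lt_or_eq_dec _ _ Hu) as [Hu'|Hu'].
    - apply ctn_mult; auto. apply fex_ctn; auto.
    - symmetry in Hu'. assert (P0 : Pp x0 = 0) by (unfold Pp; rewrite (proj2 (Ep_pos x0 H) Hu'); apply pw_zero).
      assert (c0 : c2 x0 = 0) by (destruct (c_all x0 H) as [_ [C2 [_ [_ C5]]]]; lra).
      apply ctn_dom with Pp Mf; auto. rewrite c0; ring.
      intros y BLy. destruct (T_bounds Mf y HM HM0 BLy) as [_ T2].
      destruct (P_range y BLy) as [[A1 _] _]. rewrite (Rabs_right (Pp y)); lra. }
  apply ctn_ext with (fun y => c1 y * f (en y) + c2 y * f (ex y)).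
  + apply ctn_plus; auto.
  + exists 1. split. lra. intros y BLy _. rewrite L2_BL; auto.
  + rewrite L2_BL; auto.
Qed.

Lemma L2_cont : m_continuous_on M B L2.
Proof.
intros x0 Bx0. destruct (classic (Lam x0)) as [HL|HL].
- apply L2_ctn_Lam; auto.
- apply ctn_BL_B. split; auto. apply L2_ctn_BL. split; auto.
Qed.

Lemma main_sec : exists L2' : X -> R,
  (m_continuous_on M B L2' /\
   (forall x, Lam x -> L2' x = 0) /\
   (exists L2d' : X -> R,
      (forall x, BL x -> orb_deriv M Gamma phi BL L2' x (L2d' x)) /\
      (forall x, BL x -> orb_deriv M Gamma phi BL L2d' x (a x ^ 2 * L2' x))) /\
   (forall x, m_boundary M B x -> L2' x = f x)) /\
  (forall L2'' : X -> R,
    (m_continuous_on M B L2'' /\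
     (forall x, Lam x -> L2'' x = 0) /\
     (exists L2d'' : X -> R,
        (forall x, BL x -> orb_deriv M Gamma phi BL L2'' x (L2d'' x)) /\
        (forall x, BL x -> orb_deriv M Gamma phi BL L2d'' x (a x ^ 2 * L2'' x))) /\
     (forall x, m_boundary M B x -> L2'' x = f x)) ->
    forall x, B x -> L2'' x = L2' x) /\
  ((forall x, m_boundary M B x -> f x > 0) -> forall x, BL x -> L2' x > 0).
Proof.
exists L2. split; [|split].
- split; [apply L2_cont|split; [apply L2_Lam|split]].
  + exists L2d. split; intros x Hx; apply (L2_deriv x Hx).
  + apply boundary_cond.
- intros L2'' [Hc [HL [[L2d'' [D1' D2']] Hb]]] x Bx.
  destruct (classic (Lam x)) as [HLx|HLx].
  + rewrite HL, L2_Lam; auto.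
  + apply (uniq_BL L2'' L2 L2d'' L2d); auto.
    * apply L2_cont.
    * intros y Hy; apply (L2_deriv y Hy).
    * intros y Hy; apply (L2_deriv y Hy).
    * intros y Hy. rewrite Hb, boundary_cond; auto.
    * split; auto.
- apply L2_pos.
Qed.

End Main.



Theorem mainTheorem10 (M : Metric_Space)
  (Gamma : R -> Base M -> Prop) (phi : R -> Base M -> Base M)
  (Lam N : Base M -> Prop) (L1 : Base M -> R) (delta : R)
  (a f : Base M -> R) :
  partial_flow M Gamma phi ->
  invariant M Gamma phi Lam ->
  isolating_neighborhood M Gamma phi Lam N ->
  catenary M Gamma phi Lam N L1 ->
  delta > 0 ->
  (forall x, N x -> L1 x <= delta -> m_interior M N x) ->
  let B := fun x => N x /\ L1 x <= delta in
  let BL := fun x => B x /\ ~ Lam x in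
  (forall x, BL x -> a x > 0) ->
  m_continuous_on M BL a ->
  (forall x, BL x -> orb_deriv M Gamma phi BL a x 0) ->
  (exists m, m > 0 /\ forall x, BL x -> m <= a x) ->
  m_continuous_on M (m_boundary M B) f ->
  let P := fun L2 : Base M -> R =>
    m_continuous_on M B L2 /\
    (forall x, Lam x -> L2 x = 0) /\
    (exists L2d : Base M -> R,
       (forall x, BL x -> orb_deriv M Gamma phi BL L2 x (L2d x)) /\
       (forall x, BL x -> orb_deriv M Gamma phi BL L2d x (a x ^ 2 * L2 x))) /\
    (forall x, m_boundary M B x -> L2 x = f x) in
  exists L2 : Base M -> R,
    P L2 /\
    (forall L2' : Base M -> R, P L2' -> forall x, B x -> L2' x = L2 x) /\
    ((forall x, m_boundary M B x -> f x > 0) -> forall x, BL x -> L2 x > 0).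
Proof.
intros HF Hinv [Hcomp [HLamint _]] [HL1c [HL10 [HL1p [Ld [HLd1 HLd2]]]]] Hdel HBint B0 BL0
  Hapos Hacont Hader [m [Hm Hma]] Hfc P.
exact (main_sec M Gamma phi Lam N L1 Ld delta a f m HF Hinv Hcomp HLamint HL1c HL10 HL1p HLd1 HLd2
  Hdel HBint Hapos Hacont Hader Hm Hma Hfc).
Qed.
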